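(* Let $0<c<\Gamma_0$ and $t>0$, and let $\mathcal D=\{(\tau,p):0<\tau<t,\ c<p<\Gamma_0\}$. Let $A$ be the cooperation area and regions IV, V, VI as defined in the context, and let $w_0$, $w_1$, $w_2$ be the associated thresholds defined there. If $(\tau^\star,p^\star)\in\mathcal D$ maximizes $A$ over $\mathcal D$, then one of the following holds: - $(\tau^\star,p^\star)$ lies in the closure of region IV; - $(\tau^\star,p^\star)$ lies in region V and $A_c(\tau^\star,p^\star;w_1,1)-A_s(\tau^\star,p^\star;w_0,w_1)=1-2w_1+w_0$; - $(\tau^\star,p^\star)$ lies in region VI and $A_s(\tau^\star,p^\star;w_2,1)-A_c(\tau^\star,p^\star;w_0,w_2)=1-2w_2+w_0$. Here $w_0,w_1,w_2$ are evaluated at $(\tau^\star,p^\star)$.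
   Context: The client utility is linear: $\Gamma(d)=\Gamma_0(1-d)$. For $(\tau,p)\in\mathcal D$ write $s=\tau/t$ and, for $w\in(0,1]$, set $K(w)=1-(1-w)s$. Define the SP and client outage thresholds $$d_s(w;\tau,p)=1-\frac{cK(w)}{wp},\qquad d_c(w;\tau,p)=1-\frac{p}{\Gamma_0K(w)}.$$ The cooperation area is $$A(\tau,p)=\int_0^1\max\{\min(d_s(w;\tau,p),d_c(w;\tau,p)),0\}\,dw.$$ For $0\le x\le y\le 1$, let $$A_s(\tau,p;x,y)=\int_x^y d_s(w;\tau,p)\,dw,\qquad A_c(\tau,p;x,y)=\int_x^y d_c(w;\tau,p)\,dw.$$ Define the thresholds $$w_0=\max\left\{\frac{c(t-\tau)}{pt-c\tau},\ \frac{pt-\Gamma_0(t-\tau)}{\Gamma_0\tau}\right\},$$ $$w_{1}=\left(\frac{p-\sqrt{p^2-4c\Gamma_0 s(1-s)}}{2s\sqrt{c\Gamma_0}}\right)^2,\qquad w_{2}=\left(\frac{p+\sqrt{p^2-4c\Gamma_0 s(1-s)}}{2s\sqrt{c\Gamma_0}}\right)^2.$$ The regions (subsets of $\mathcal D$) are: - region IV: $p^2\ge 4c\Gamma_0 s(1-s)$, $p<\Gamma_0(1-s)+cs$, $p<\sqrt{c\Gamma_0}$, and $\tfrac12<s<\tfrac{\Gamma_0}{\Gamma_0+c}$; - region V: $p^2\ge4c\Gamma_0 s(1-s)$, $p<\Gamma_0(1-s)+cs$, and $p>\sqrt{c\Gamma_0}$; - region VI: $p^2\ge 4c\Gamma_0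 s(1-s)$, $p>\Gamma_0(1-s)+cs$, and $p<\sqrt{c\Gamma_0}$. *)

(* Defs.v *)
From Stdlib Require Import Reals.
From Coquelicot Require Import Coquelicot.
Open Scope R_scope.

Definition sr (t tau : R) : R := tau / t.
Definition Kw (t tau w : R) : R := 1 - (1 - w) * sr t tau.

Definition d_s (c t tau p w : R) : R := 1 - c * Kw t tau w / (w * p).
Definition d_c (G0 t tau p w : R) : R := 1 - p / (G0 * Kw t tau w).

Definition coop_area (c G0 t tau p : R) : R :=
  RInt (fun w => Rmax (Rmin (d_s c t tau p w) (d_c G0 t tau p w)) 0) 0 1.

Definition A_s (c t tau p x y : R) : R := RInt (fun w => d_s c t tau p w) x y.
Definition A_c (G0 t tau p x y : R) : R := RInt (fun w => d_c G0 t tau p w) x y.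

Definition inD (c G0 t tau p : R) : Prop := 0 < tau < t /\ c < p < G0.

Definition w0 (c G0 t tau p : R) : R :=
  Rmax (c * (t - tau) / (p * t - c * tau)) ((p * t - G0 * (t - tau)) / (G0 * tau)).
Definition w1 (c G0 t tau p : R) : R :=
  let s := sr t tau in
  ((p - sqrt (p ^ 2 - 4 * c * G0 * s * (1 - s))) / (2 * s * sqrt (c * G0))) ^ 2.
Definition w2 (c G0 t tau p : R) : R :=
  let s := sr t tau in
  ((p + sqrt (p ^ 2 - 4 * c * G0 * s * (1 - s))) / (2 * s * sqrt (c * G0))) ^ 2.

Definition region_IV (c G0 t tau p : R) : Prop :=
  let s := sr t tau in
  inD c G0 t tau p /\ p ^ 2 >= 4 * c * G0 * s * (1 - s) /\
  p < G0 * (1 - s) + c * s /\ p < sqrt (c * G0) /\ 1 / 2 < s < G0 / (G0 + c).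
Definition region_V (c G0 t tau p : R) : Prop :=
  let s := sr t tau in
  inD c G0 t tau p /\ p ^ 2 >= 4 * c * G0 * s * (1 - s) /\
  p < G0 * (1 - s) + c * s /\ p > sqrt (c * G0).
Definition region_VI (c G0 t tau p : R) : Prop :=
  let s := sr t tau in
  inD c G0 t tau p /\ p ^ 2 >= 4 * c * G0 * s * (1 - s) /\
  p > G0 * (1 - s) + c * s /\ p < sqrt (c * G0).

Definition in_closure (P : R -> R -> Prop) (tau p : R) : Prop :=
  forall eps, 0 < eps ->
    exists tau' p', P tau' p' /\ Rabs (tau - tau') < eps /\ Rabs (p - p') < eps.

(* Main.v *)
Require Import Defs.
From Stdlib Require Import Reals Lra Psatz.
From Coquelicot Require Import Coquelicot.
Open Scope R_scope.

Definition Ks (s w : R) : R := 1 - (1 - w) * s.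
Definition dS (c s p w : R) : R := 1 - c * Ks s w / (w * p).
Definition dC (G s p w : R) : R := 1 - p / (G * Ks s w).
Definition fA (c G s p w : R) : R := Rmax (Rmin (dS c s p w) (dC G s p w)) 0.
Definition area (c G s p : R) : R := RInt (fA c G s p) 0 1.

Lemma coop_area_eq c G t tau p : coop_area c G t tau p = area c G (tau / t) p.
Proof. reflexivity. Qed.

Lemma Rmax_abs x y : Rmax x y = (x + y + Rabs (x - y)) / 2.
Proof. unfold Rmax; destruct (Rle_dec x y); [rewrite Rabs_left1 | rewrite Rabs_right]; lra. Qed.
Lemma Rmin_abs x y : Rmin x y = (x + y - Rabs (x - y)) / 2.
Proof. unfold Rmin; destruct (Rle_dec x y); [rewrite Rabs_left1 | rewrite Rabs_right]; lra. Qed.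

Lemma continuous_Rmax_comp (f g : R -> R) x :
  continuous f x -> continuous g x -> continuous (fun y => Rmax (f y) (g y)) x.
Proof.
  intros Hf Hg.
  apply continuous_ext with (f := fun y => (f y + g y + Rabs (f y - g y)) * / 2).
  { intros y; rewrite Rmax_abs; lra. }
  apply (continuous_mult (fun y => f y + g y + Rabs (f y - g y)) (fun _ => / 2)).
  2: apply continuous_const.
  apply (continuous_plus (fun y => f y + g y) (fun y => Rabs (f y - g y))).
  apply (continuous_plus f g); auto.
  apply continuous_Rabs_comp.
  apply (continuous_plus f (fun y => opp (g y))); auto.
  apply (continuous_opp g); auto.
Qed.

Lemma continuous_Rmin_comp (f g : R -> R) x :
  continuous f x -> continuous g x -> continuous (fun y => Rmin (f y) (g y)) x.
Proof.
  intros Hf Hg.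
  apply continuous_ext with (f := fun y => (f y + g y - Rabs (f y - g y)) * / 2).
  { intros y; rewrite Rmin_abs; lra. }
  apply (continuous_mult (fun y => f y + g y - Rabs (f y - g y)) (fun _ => / 2)).
  2: apply continuous_const.
  apply (continuous_plus (fun y => f y + g y) (fun y => opp (Rabs (f y - g y)))).
  apply (continuous_plus f g); auto.
  apply (continuous_opp (fun y => Rabs (f y - g y))).
  apply continuous_Rabs_comp.
  apply (continuous_plus f (fun y => opp (g y))); auto.
  apply (continuous_opp g); auto.
Qed.

Lemma ex_RInt_trunc (h : R -> R) (m : R) :
  0 < m < 1 -> (forall z, m <= z <= 1 -> continuous h z) ->
  (forall z, 0 < z <= m -> h z = h m) -> ex_RInt h 0 1.
Proof.
  intros Hm Hc He.
  apply ex_RInt_ext with (f := fun w => h (Rmax w m)).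
  { intros x Hx. rewrite Rmin_left in Hx by lra. rewrite Rmax_right in Hx by lra.
    unfold Rmax at 1; destruct (Rle_dec x m).
    - symmetry; apply He; lra.
    - reflexivity. }
  apply (ex_RInt_continuous (V:=R_CompleteNormedModule)). intros z Hz.
  rewrite Rmin_left in Hz by lra. rewrite Rmax_right in Hz by lra.
  apply (continuous_comp (fun w => Rmax w m) h).
  - apply continuous_Rmax_comp. apply continuous_id. apply continuous_const.
  - apply Hc. split. apply Rmax_r. apply Rmax_lub; lra.
Qed.

Lemma cont_dS c s p z : 0 < z -> 0 < p -> continuous (dS c s p) z.
Proof.
  intros Hz Hp. apply (ex_derive_continuous (K:=R_AbsRing) (V:=R_NormedModule)). unfold dS, Ks.
  auto_derive. repeat split. apply Rgt_not_eq. apply Rmult_lt_0_compat; lra.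
Qed.

Lemma cont_dC G s p z : 0 < G -> 0 < Ks s z -> continuous (dC G s p) z.
Proof.
  intros HG Hz. apply (ex_derive_continuous (K:=R_AbsRing) (V:=R_NormedModule)). unfold dC. unfold Ks in *.
  auto_derive. repeat split. apply Rgt_not_eq. apply Rmult_lt_0_compat; lra.
Qed.

Lemma Ks_pos s w : 0 < s < 1 -> 0 <= w -> 0 < Ks s w.
Proof. intros. unfold Ks. nra. Qed.

Lemma dS_neg_small c s p z : 0 < c -> 0 < s < 1 -> c < p -> 0 < z <= c * (1 - s) / (2 * p) -> dS c s p z < 0.
Proof.
  intros Hc Hs Hp Hz. unfold dS, Ks.
  assert (0 < p) by lra. destruct Hz as [Hz0 Hz]. destruct Hs as [Hs0 Hs1].
  assert (z * (2*p) <= c*(1-s)). { apply Rmult_le_compat_r with (r := 2*p) in Hz; [|lra].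
    unfold Rdiv in Hz. rewrite Rmult_assoc, Rinv_l, Rmult_1_r in Hz; lra. }
  assert (2 <= c * (1 - (1 - z) * s) / (z * p)).
  { assert (0 < c*z*s) by (repeat apply Rmult_lt_0_compat; lra). apply Rle_div_r. nra. nra. }
  lra.
Qed.

Lemma small_m c s p : 0 < c -> 0 < s < 1 -> c < p -> 0 < c * (1 - s) / (2 * p) < 1.
Proof.
  intros. split. apply Rdiv_lt_0_compat; nra.
  apply Rmult_lt_reg_r with (r := 2*p). lra. unfold Rdiv. rewrite Rmult_assoc, Rinv_l; nra.
Qed.

Lemma ex_RInt_fA c G s p : 0 < c -> c < G -> 0 < s < 1 -> c < p -> ex_RInt (fA c G s p) 0 1.
Proof.
  intros Hc HG Hs Hp.
  apply ex_RInt_trunc with (m := c * (1 - s) / (2 * p)).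
  - apply small_m; auto.
  - intros z Hz. pose proof (small_m c s p Hc Hs Hp).
    unfold fA. apply continuous_Rmax_comp. apply continuous_Rmin_comp.
    apply cont_dS; lra. apply cont_dC. lra. apply Ks_pos; lra.
    apply continuous_const.
  - intros z Hz. pose proof (small_m c s p Hc Hs Hp).
    unfold fA. rewrite !Rmax_right. auto.
    eapply Rle_trans; [apply Rmin_l|]. left; apply dS_neg_small; lra.
    eapply Rle_trans; [apply Rmin_l|]. left; apply dS_neg_small; lra.
Qed.

Lemma ex_RInt_dSp c s p : 0 < c -> 0 < s < 1 -> c < p -> ex_RInt (fun w => Rmax (dS c s p w) 0) 0 1.
Proof.
  intros Hc Hs Hp.
  apply ex_RInt_trunc with (m := c * (1 - s) / (2 * p)).
  - apply small_m; auto.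
  - intros z Hz. pose proof (small_m c s p Hc Hs Hp).
    apply continuous_Rmax_comp. apply cont_dS; lra. apply continuous_const.
  - intros z Hz. pose proof (small_m c s p Hc Hs Hp).
    rewrite !Rmax_right. auto.
    left; apply dS_neg_small; lra. left; apply dS_neg_small; lra.
Qed.

Lemma ex_RInt_dCp G s p : 0 < G -> 0 < s < 1 -> ex_RInt (fun w => Rmax (dC G s p w) 0) 0 1.
Proof.
  intros HG Hs. apply (ex_RInt_continuous (V:=R_CompleteNormedModule)). intros z Hz.
  rewrite Rmin_left in Hz by lra. rewrite Rmax_right in Hz by lra.
  apply continuous_Rmax_comp. apply cont_dC. auto. apply Ks_pos; lra. apply continuous_const.
Qed.

Definition Hs (c s p w : R) : R := w - c / p * ((1 - s) * ln w + s * w).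
Definition Hc (G s p w : R) : R := w - p / (G * s) * ln (Ks s w).

Lemma RInt_dS c s p x y : 0 < x -> 0 < y -> 0 < p ->
  RInt (dS c s p) x y = Hs c s p y - Hs c s p x.
Proof.
  intros Hx Hy Hp.
  assert (Hm : 0 < Rmin x y) by (apply Rmin_glb_lt; auto).
  apply is_RInt_unique.
  replace (Hs c s p y - Hs c s p x) with (minus (Hs c s p y) (Hs c s p x)) by reflexivity.
  apply (is_RInt_derive (V:=R_CompleteNormedModule)).
  - intros z Hz. unfold Hs, dS, Ks. auto_derive.
    + repeat split; lra.
    + field. split; lra.
  - intros z Hz. apply cont_dS; lra.
Qed.

Lemma RInt_dC G s p x y : 0 < G -> 0 < s < 1 -> 0 <= x -> 0 <= y ->
  RInt (dC G s p) x y = Hc G s p y - Hc G s p x.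
Proof.
  intros HG Hs Hx Hy.
  assert (Hm : 0 <= Rmin x y) by (apply Rmin_glb; auto).
  apply is_RInt_unique.
  replace (Hc G s p y - Hc G s p x) with (minus (Hc G s p y) (Hc G s p x)) by reflexivity.
  apply (is_RInt_derive (V:=R_CompleteNormedModule)).
  - intros z Hz. assert (HK : 0 < Ks s z) by (apply Ks_pos; lra).
    unfold Hc, dC. unfold Ks in *. auto_derive.
    + repeat split; lra.
    + field. split; lra.
  - intros z Hz. apply cont_dC. lra. apply Ks_pos; lra.
Qed.

Definition Dq (c G s p : R) : R := p ^ 2 - 4 * c * G * s * (1 - s).
Definition W1f (c G s p : R) : R := (p ^ 2 - 2 * c * G * s * (1 - s) - p * sqrt (Dq c G s p)) / (2 * c * G * s ^ 2).
Definition W2f (c G s p : R) : R := (p ^ 2 - 2 * c * G * s * (1 - s) + p * sqrt (Dq c G s p)) / (2 * c * G * s ^ 2).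
Definition phi (c G s p w : R) : R := c * G * (Ks s w) ^ 2 - p ^ 2 * w.
Definition wsf (c s p : R) : R := c * (1 - s) / (p - c * s).
Definition wcf (G s p : R) : R := (p - G * (1 - s)) / (G * s).
Definition lin (c G s : R) : R := G * (1 - s) + c * s.

Ltac pos := repeat (first [apply Rmult_lt_0_compat | apply pow_lt | apply Rinv_0_lt_compat | apply Rdiv_lt_0_compat]); try lra.

Lemma sqrt_sq_pos x : 0 <= x -> sqrt x * sqrt x = x.
Proof. intros; apply sqrt_sqrt; auto. Qed.

Lemma w1_eq c G t tau p : 0 < c -> 0 < G -> 0 < t -> 0 < tau ->
  0 <= Dq c G (tau / t) p -> w1 c G t tau p = W1f c G (tau / t) p.
Proof.
  intros Hc HG Ht Htau HD. unfold w1, W1f, sr. unfold Dq in *.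
  set (s := tau / t) in *. assert (Hs : 0 < s) by (apply Rdiv_lt_0_compat; auto).
  set (q := sqrt (p ^ 2 - 4 * c * G * s * (1 - s))).
  assert (Hq : q * q = p ^ 2 - 4 * c * G * s * (1 - s)) by (apply sqrt_sqrt; auto).
  assert (Hr : sqrt (c * G) * sqrt (c * G) = c * G) by (apply sqrt_sqrt; nra).
  assert (Hr0 : 0 < sqrt (c * G)) by (apply sqrt_lt_R0; nra).
  set (r := sqrt (c * G)) in *.
  assert (E : ((p - q) / (2 * s * r)) ^ 2 = (p - q) ^ 2 / (4 * s ^ 2 * (r * r))) by (field; split; lra).
  rewrite E, Hr. apply Rmult_eq_reg_r with (r := 4 * s^2 * (c*G)). 2: { apply Rgt_not_eq. apply Rmult_lt_0_compat. nra. nra. }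
  field_simplify. 2: split; lra. 2: split; lra.
  replace (q^2) with (q*q) by ring. rewrite Hq. field.
Qed.

Lemma w2_eq c G t tau p : 0 < c -> 0 < G -> 0 < t -> 0 < tau ->
  0 <= Dq c G (tau / t) p -> w2 c G t tau p = W2f c G (tau / t) p.
Proof.
  intros Hc HG Ht Htau HD. unfold w2, W2f, sr. unfold Dq in *.
  set (s := tau / t) in *. assert (Hs : 0 < s) by (apply Rdiv_lt_0_compat; auto).
  set (q := sqrt (p ^ 2 - 4 * c * G * s * (1 - s))).
  assert (Hq : q * q = p ^ 2 - 4 * c * G * s * (1 - s)) by (apply sqrt_sqrt; auto).
  assert (Hr : sqrt (c * G) * sqrt (c * G) = c * G) by (apply sqrt_sqrt; nra).
  assert (Hr0 : 0 < sqrt (c * G)) by (apply sqrt_lt_R0; nra).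
  set (r := sqrt (c * G)) in *.
  assert (E : ((p + q) / (2 * s * r)) ^ 2 = (p + q) ^ 2 / (4 * s ^ 2 * (r * r))) by (field; split; lra).
  rewrite E, Hr. apply Rmult_eq_reg_r with (r := 4 * s^2 * (c*G)). 2: { apply Rgt_not_eq. apply Rmult_lt_0_compat. nra. nra. }
  field_simplify. 2: split; lra. 2: split; lra.
  replace (q^2) with (q*q) by ring. rewrite Hq. field.
Qed.

Lemma phi_fact c G s p w : 0 < c -> 0 < G -> 0 < s -> 0 <= Dq c G s p ->
  phi c G s p w = c * G * s ^ 2 * (w - W1f c G s p) * (w - W2f c G s p).
Proof.
  intros Hc HG Hs HD. unfold phi, W1f, W2f, Ks.
  assert (Hq : sqrt (Dq c G s p) * sqrt (Dq c G s p) = Dq c G s p) by (apply sqrt_sqrt; auto).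
  set (q := sqrt (Dq c G s p)) in *. unfold Dq in Hq.
  field_simplify. 2: split; lra.
  replace (q^2) with (q*q) by ring. rewrite Hq. field. split; lra.
Qed.

Lemma W1_le_W2 c G s p : 0 < c -> 0 < G -> 0 < s -> 0 <= p -> W1f c G s p <= W2f c G s p.
Proof.
  intros. unfold W1f, W2f. unfold Rdiv. apply Rmult_le_compat_r.
  left; apply Rinv_0_lt_compat. pos.
  assert (0 <= p * sqrt (Dq c G s p)) by (apply Rmult_le_pos; auto; apply sqrt_pos). lra.
Qed.

Lemma W1_lt_W2 c G s p : 0 < c -> 0 < G -> 0 < s -> 0 < p -> 0 < Dq c G s p -> W1f c G s p < W2f c G s p.
Proof.
  intros. unfold W1f, W2f. unfold Rdiv. apply Rmult_lt_compat_r.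
  apply Rinv_0_lt_compat. pos.
  assert (0 < p * sqrt (Dq c G s p)) by (apply Rmult_lt_0_compat; auto; apply sqrt_lt_R0; auto). lra.
Qed.

Lemma dC_minus_dS c G s p w : 0 < G -> 0 < p -> 0 < w -> 0 < Ks s w ->
  dC G s p w - dS c s p w = phi c G s p w / (G * Ks s w * w * p).
Proof. intros. unfold dC, dS, phi. field. repeat split; lra. Qed.

Lemma dS_le_dC c G s p w : 0 < G -> 0 < p -> 0 < w -> 0 < Ks s w ->
  0 <= phi c G s p w -> dS c s p w <= dC G s p w.
Proof.
  intros. assert (0 <= phi c G s p w / (G * Ks s w * w * p)).
  { apply Rdiv_le_0_compat; auto. repeat apply Rmult_lt_0_compat; auto. }
  rewrite <- dC_minus_dS in H4 by auto. lra.
Qed.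

Lemma dC_le_dS c G s p w : 0 < G -> 0 < p -> 0 < w -> 0 < Ks s w ->
  phi c G s p w <= 0 -> dC G s p w <= dS c s p w.
Proof.
  intros. assert (phi c G s p w / (G * Ks s w * w * p) <= 0).
  { unfold Rdiv. apply Rmult_le_0_r. auto. left. apply Rinv_0_lt_compat. repeat apply Rmult_lt_0_compat; auto. }
  rewrite <- dC_minus_dS in H4 by auto. lra.
Qed.

Lemma dS_pos c s p w : 0 < c -> 0 < s < 1 -> c < p -> wsf c s p < w -> 0 < dS c s p w.
Proof.
  intros Hc Hs Hp Hw. unfold wsf in Hw. unfold dS, Ks.
  assert (0 < p - c * s) by nra.
  assert (0 < c * (1 - s) / (p - c * s)) by (apply Rdiv_lt_0_compat; nra).
  assert (0 < w) by lra.
  apply Rlt_div_l in Hw; auto.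
  assert (c * (1 - (1 - w) * s) / (w * p) < 1). { apply Rlt_div_l. nra. nra. }
  lra.
Qed.

Lemma dS_neg c s p w : 0 < c -> 0 < s < 1 -> c < p -> 0 < w < wsf c s p -> dS c s p w < 0.
Proof.
  intros Hc Hs Hp Hw. unfold wsf in Hw. unfold dS, Ks.
  assert (0 < p - c * s) by nra. destruct Hw as [Hw0 Hw].
  apply Rlt_div_r in Hw; auto.
  assert (1 < c * (1 - (1 - w) * s) / (w * p)). { apply Rlt_div_r. nra. nra. }
  lra.
Qed.

Lemma dS_ws c s p : 0 < c -> 0 < s < 1 -> c < p -> dS c s p (wsf c s p) = 0.
Proof. intros. unfold dS, Ks, wsf. field. split. nra. split; nra. Qed.

Lemma dC_pos G s p w : 0 < G -> 0 < s < 1 -> 0 <= w -> wcf G s p < w -> 0 < dC G s p w.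
Proof.
  intros HG Hs Hw0 Hw. unfold wcf in Hw. pose proof (Ks_pos s w Hs Hw0). unfold dC. unfold Ks in *.
  apply Rlt_div_l in Hw; [|nra].
  assert (p / (G * (1 - (1 - w) * s)) < 1). { apply Rlt_div_l. nra. nra. }
  lra.
Qed.

Lemma dC_neg G s p w : 0 < G -> 0 < s < 1 -> 0 <= w < wcf G s p -> dC G s p w < 0.
Proof.
  intros HG Hs Hw. unfold wcf in Hw. destruct Hw as [Hw0 Hw]. pose proof (Ks_pos s w Hs Hw0). unfold dC. unfold Ks in *.
  apply Rlt_div_r in Hw; [|nra].
  assert (1 < p / (G * (1 - (1 - w) * s))). { apply Rlt_div_r. nra. nra. }
  lra.
Qed.

Lemma phi_ws c G s p : 0 < c -> 0 < s < 1 -> c < p ->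
  phi c G s p (wsf c s p) = c * Ks s (wsf c s p) * (G * Ks s (wsf c s p) - p).
Proof.
  intros. assert (E : Ks s (wsf c s p) = p * wsf c s p / c).
  { unfold Ks, wsf. field. split. nra. lra. }
  unfold phi. rewrite E. field. lra.
Qed.

Lemma Ks_ws c s p : 0 < c -> 0 < s < 1 -> c < p -> Ks s (wsf c s p) = p * wsf c s p / c.
Proof. intros. unfold Ks, wsf. field. split. nra. lra. Qed.

Lemma phi_wc c G s p : 0 < G -> 0 < s < 1 ->
  phi c G s p (wcf G s p) = p ^ 2 * (c / G - wcf G s p).
Proof. intros. unfold phi, Ks, wcf. field. split; lra. Qed.

Lemma ws_pos c s p : 0 < c -> 0 < s < 1 -> c < p -> 0 < wsf c s p.
Proof. intros. unfold wsf. apply Rdiv_lt_0_compat; nra. Qed.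

Lemma ws_lt1 c s p : 0 < c -> 0 < s < 1 -> c < p -> wsf c s p < 1.
Proof. intros. unfold wsf. apply Rlt_div_l; nra. Qed.

Lemma wc_lt1 G s p : 0 < G -> 0 < s < 1 -> p < G -> wcf G s p < 1.
Proof. intros. unfold wcf. apply Rlt_div_l; nra. Qed.

Lemma frac_le a b e d : 0 < b -> 0 < d -> a * d <= e * b -> a / b <= e / d.
Proof.
  intros Hb Hd H.
  replace (a / b) with ((a * d) * / (b * d)) by (field; lra).
  replace (e / d) with ((e * b) * / (b * d)) by (field; lra).
  apply Rmult_le_compat_r; auto. left; apply Rinv_0_lt_compat; nra.
Qed.
Lemma frac_lt a b e d : 0 < b -> 0 < d -> a * d < e * b -> a / b < e / d.
Proof.
  intros Hb Hd H.
  replace (a / b) with ((a * d) * / (b * d)) by (field; lra).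
  replace (e / d) with ((e * b) * / (b * d)) by (field; lra).
  apply Rmult_lt_compat_r; auto. apply Rinv_0_lt_compat; nra.
Qed.

Lemma ws_ge_cG c G s p : 0 < c -> 0 < G -> 0 < s < 1 -> c < p -> p <= lin c G s -> c / G <= wsf c s p.
Proof. intros. unfold wsf, lin in *. apply frac_le; nra. Qed.
Lemma ws_le_cG c G s p : 0 < c -> 0 < G -> 0 < s < 1 -> c < p -> lin c G s <= p -> wsf c s p <= c / G.
Proof. intros. unfold wsf, lin in *. apply frac_le; nra. Qed.
Lemma wc_le_cG c G s p : 0 < c -> 0 < G -> 0 < s < 1 -> p <= lin c G s -> wcf G s p <= c / G.
Proof. intros. unfold wcf, lin in *. apply frac_le; nra. Qed.
Lemma wc_ge_cG c G s p : 0 < c -> 0 < G -> 0 < s < 1 -> lin c G s <= p -> c / G <= wcf G s p.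
Proof. intros. unfold wcf, lin in *. apply frac_le; nra. Qed.
Lemma ws_gt_cG c G s p : 0 < c -> 0 < G -> 0 < s < 1 -> c < p -> p < lin c G s -> c / G < wsf c s p.
Proof. intros. unfold wsf, lin in *. apply frac_lt; nra. Qed.
Lemma wc_gt_cG c G s p : 0 < c -> 0 < G -> 0 < s < 1 -> lin c G s < p -> c / G < wcf G s p.
Proof. intros. unfold wcf, lin in *. apply frac_lt; nra. Qed.

Lemma split3 (f g h : R -> R) a b :
  0 <= a -> a <= b -> b <= 1 -> ex_RInt f 0 1 ->
  (forall x, 0 < x < a -> f x = 0) ->
  (forall x, a < x < b -> f x = g x) ->
  (forall x, b < x < 1 -> f x = h x) ->
  RInt f 0 1 = RInt g a b + RInt h b 1.
Proof.
  intros Ha Hab Hb Hf H1 H2 H3.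
  assert (E0a : ex_RInt f 0 a) by (apply (ex_RInt_Chasles_1 (V:=R_CompleteNormedModule)) with 1; auto; lra).
  assert (Ea1 : ex_RInt f a 1) by (apply (ex_RInt_Chasles_2 (V:=R_CompleteNormedModule)) with 0; auto; lra).
  assert (Eab : ex_RInt f a b) by (apply (ex_RInt_Chasles_1 (V:=R_CompleteNormedModule)) with 1; auto; lra).
  assert (Eb1 : ex_RInt f b 1) by (apply (ex_RInt_Chasles_2 (V:=R_CompleteNormedModule)) with a; auto; lra).
  rewrite <- (RInt_Chasles f 0 a 1) by auto.
  rewrite <- (RInt_Chasles f a b 1) by auto.
  assert (R0 : RInt f 0 a = 0).
  { rewrite (RInt_ext f (fun _ => 0)). rewrite RInt_const. unfold scal; simpl; unfold mult; simpl. ring.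
    intros x Hx. rewrite Rmin_left in Hx by lra. rewrite Rmax_right in Hx by lra. apply H1; lra. }
  rewrite R0. rewrite (RInt_ext f g a b). rewrite (RInt_ext f h b 1).
  unfold plus; simpl. ring.
  - intros x Hx. rewrite Rmin_left in Hx by lra. rewrite Rmax_right in Hx by lra. apply H3; lra.
  - intros x Hx. rewrite Rmin_left in Hx by lra. rewrite Rmax_right in Hx by lra. apply H2; lra.
Qed.

Lemma Dq_pos_big c G s p : 0 < c -> 0 < G -> 0 < s < 1 -> c * G < p ^ 2 -> 0 < Dq c G s p.
Proof. intros. unfold Dq. assert (0 <= c*G*(2*s-1)^2) by (apply Rmult_le_pos; [nra | apply pow2_ge_0]).
assert (E: p ^ 2 - 4 * c * G * s * (1 - s) = p^2 - c*G + c*G*(2*s-1)^2) by ring. rewrite E. lra. Qed.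

Lemma prod_neg A x y : 0 < A -> A * x * y < 0 -> x * y < 0.
Proof. intros. rewrite Rmult_assoc in H0. destruct (Rlt_le_dec (x*y) 0); auto.
  assert (0 <= A * (x*y)) by (apply Rmult_le_pos; lra). lra. Qed.
Lemma prod_pos A x y : 0 < A -> 0 < A * x * y -> 0 < x * y.
Proof. intros. rewrite Rmult_assoc in H0. destruct (Rlt_le_dec 0 (x*y)); auto.
  assert (A * (x*y) <= 0) by (apply Rmult_le_0_l; lra). lra. Qed.
Lemma prod_nonneg A x y : 0 < A -> 0 <= A * x * y -> 0 <= x * y.
Proof. intros. rewrite Rmult_assoc in H0. destruct (Rle_lt_dec 0 (x*y)); auto.
  assert (0 < A * (- (x*y))) by (apply Rmult_lt_0_compat; lra). lra. Qed.
Lemma prod_nonpos A x y : 0 < A -> A * x * y <= 0 -> x * y <= 0.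
Proof. intros. rewrite Rmult_assoc in H0. destruct (Rle_lt_dec (x*y) 0); auto.
  assert (0 < A * (x*y)) by (apply Rmult_lt_0_compat; lra). lra. Qed.

Lemma prod3_nonneg A x y : 0 < A -> 0 <= x * y -> 0 <= A * x * y.
Proof. intros. rewrite Rmult_assoc. apply Rmult_le_pos; lra. Qed.
Lemma prod3_nonpos A x y : 0 < A -> x * y <= 0 -> A * x * y <= 0.
Proof. intros. rewrite Rmult_assoc. apply Rmult_le_0_l; lra. Qed.

Definition Gv (c G s p : R) : R :=
  (Hs c s p (W1f c G s p) - Hs c s p (wsf c s p)) + (Hc G s p 1 - Hc G s p (W1f c G s p)).
Definition Gvi (c G s p : R) : R :=
  (Hc G s p (W2f c G s p) - Hc G s p (wcf G s p)) + (Hs c s p 1 - Hs c s p (W2f c G s p)).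

Lemma Ks1 s : Ks s 1 = 1.
Proof. unfold Ks; ring. Qed.

Lemma V_order c G s p : 0 < c -> c < G -> 0 < s < 1 -> c < p -> p < G ->
  c * G < p ^ 2 -> p <= lin c G s ->
  0 < wsf c s p /\ wsf c s p <= W1f c G s p /\ W1f c G s p < 1 /\ 1 < W2f c G s p
  /\ wcf G s p <= wsf c s p.
Proof.
  intros Hc HcG Hs Hp HpG Hsq Hl.
  assert (HG : 0 < G) by lra.
  assert (HD := Dq_pos_big c G s p Hc HG Hs Hsq).
  assert (Hf := fun w => phi_fact c G s p w Hc HG (proj1 Hs) (Rlt_le _ _ HD)).
  assert (Hle := W1_le_W2 c G s p Hc HG (proj1 Hs) ltac:(lra)).
  assert (A : 0 < c * G * s ^ 2) by pos.
  assert (P1 : phi c G s p 1 < 0) by (unfold phi; rewrite Ks1; nra).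
  rewrite Hf in P1. apply prod_neg in P1; auto.
  assert (W1 : W1f c G s p < 1 /\ 1 < W2f c G s p).
  { destruct (Rlt_le_dec (W1f c G s p) 1); destruct (Rlt_le_dec 1 (W2f c G s p)); try (split; auto; fail).
    - assert (0 <= (1 - W1f c G s p) * (1 - W2f c G s p)) by nra. nra.
    - assert (0 <= (1 - W1f c G s p) * (1 - W2f c G s p)) by nra. nra.
    - assert (0 <= (1 - W1f c G s p) * (1 - W2f c G s p)) by nra. nra. }
  pose proof (ws_pos c s p Hc Hs Hp). pose proof (ws_lt1 c s p Hc Hs Hp).
  pose proof (ws_ge_cG c G s p Hc HG Hs Hp Hl).
  pose proof (wc_le_cG c G s p Hc HG Hs Hl).
  assert (Pws : 0 <= phi c G s p (wsf c s p)).
  { rewrite phi_ws by auto. rewrite Ks_ws by auto.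
    assert (G * wsf c s p >= c). { apply Rle_ge. apply Rmult_le_compat_l with (r:=G) in H1; [|lra]. replace (G*(c/G)) with c in H1 by (field; lra). exact H1. }
    apply Rmult_le_pos. apply Rmult_le_pos. lra. apply Rdiv_le_0_compat; nra.
    replace (G * (p * wsf c s p / c) - p) with (p * (G * wsf c s p - c) / c) by (field; lra).
    apply Rdiv_le_0_compat; nra. }
  rewrite Hf in Pws. apply prod_nonneg in Pws; auto.
  repeat split; try lra.
  destruct (Rle_dec (wsf c s p) (W1f c G s p)); auto.
  assert ((wsf c s p - W1f c G s p) * (wsf c s p - W2f c G s p) < 0).
  { rewrite Rmult_comm. apply Rmult_neg_pos; lra. }
  lra.
Qed.

Lemma area_V c G s p : 0 < c -> c < G -> 0 < s < 1 -> c < p -> p < G ->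
  c * G < p ^ 2 -> p <= lin c G s -> area c G s p = Gv c G s p.
Proof.
  intros Hc HcG Hs Hp HpG Hsq Hl.
  assert (HG : 0 < G) by lra.
  destruct (V_order c G s p Hc HcG Hs Hp HpG Hsq Hl) as (O1 & O2 & O3 & O4 & O5).
  assert (HD := Dq_pos_big c G s p Hc HG Hs Hsq).
  assert (Hf := fun w => phi_fact c G s p w Hc HG (proj1 Hs) (Rlt_le _ _ HD)).
  assert (A : 0 < c * G * s ^ 2) by pos.
  unfold area, Gv.
  rewrite (split3 (fA c G s p) (dS c s p) (dC G s p) (wsf c s p) (W1f c G s p)); try lra.
  - rewrite RInt_dS by lra. rewrite RInt_dC by lra. ring.
  - apply ex_RInt_fA; lra.
  - intros x Hx. unfold fA. apply Rmax_right.
    eapply Rle_trans. apply Rmin_l. left. apply dS_neg; lra.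
  - intros x Hx. unfold fA. assert (HK : 0 < Ks s x) by (apply Ks_pos; lra).
    assert (0 < dS c s p x) by (apply dS_pos; lra).
    rewrite Rmin_left. apply Rmax_left; lra.
    apply dS_le_dC; try lra. rewrite Hf. apply prod3_nonneg; auto. nra.
  - intros x Hx. unfold fA. assert (HK : 0 < Ks s x) by (apply Ks_pos; lra).
    assert (0 < dC G s p x) by (apply dC_pos; lra).
    rewrite Rmin_right. apply Rmax_left; lra.
    apply dC_le_dS; try lra. rewrite Hf. apply prod3_nonpos; auto. nra.
Qed.

Lemma Dq_nonneg_lin c G s p : 0 < c -> 0 < G -> 0 < s < 1 -> lin c G s <= p -> 0 <= Dq c G s p.
Proof.
  intros. unfold Dq, lin in *.
  assert (0 <= G * (1 - s) + c * s) by nra.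
  assert ((G * (1 - s) + c * s)^2 <= p^2) by (apply pow_incr; lra).
  assert (E : (G * (1 - s) + c * s)^2 = 4 * c * G * s * (1 - s) + (G*(1-s) - c*s)^2) by ring.
  assert (0 <= (G*(1-s) - c*s)^2) by apply pow2_ge_0. lra.
Qed.

Lemma VI_order c G s p : 0 < c -> c < G -> 0 < s < 1 -> c < p -> p < G ->
  p ^ 2 < c * G -> lin c G s <= p -> W1f c G s p < wcf G s p ->
  0 < wcf G s p /\ wcf G s p <= W2f c G s p /\ W2f c G s p < 1 /\ wsf c s p <= wcf G s p.
Proof.
  intros Hc HcG Hs Hp HpG Hsq Hl HW.
  assert (HG : 0 < G) by lra.
  assert (HD := Dq_nonneg_lin c G s p Hc HG Hs Hl).
  assert (Hf := fun w => phi_fact c G s p w Hc HG (proj1 Hs) HD).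
  assert (A : 0 < c * G * s ^ 2) by pos.
  pose proof (wc_ge_cG c G s p Hc HG Hs Hl).
  pose proof (ws_le_cG c G s p Hc HG Hs Hp Hl).
  assert (0 < c / G) by pos.
  assert (Pwc : phi c G s p (wcf G s p) <= 0).
  { rewrite phi_wc by auto. apply Rmult_le_0_l. apply pow2_ge_0. lra. }
  rewrite Hf in Pwc. apply prod_nonpos in Pwc; auto.
  assert (wcf G s p <= W2f c G s p).
  { destruct (Rle_dec (wcf G s p) (W2f c G s p)); auto.
    assert (0 < (wcf G s p - W1f c G s p) * (wcf G s p - W2f c G s p)) by (apply Rmult_lt_0_compat; lra). lra. }
  pose proof (wc_lt1 G s p HG Hs HpG).
  assert (P1 : 0 < phi c G s p 1) by (unfold phi; rewrite Ks1; nra).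
  rewrite Hf in P1. apply prod_pos in P1; auto.
  repeat split; try lra.
  destruct (Rlt_dec (W2f c G s p) 1); auto.
  assert ((1 - W1f c G s p) * (1 - W2f c G s p) <= 0).
  { rewrite Rmult_comm. apply Rmult_le_0_r; lra. }
  lra.
Qed.

Lemma area_VI c G s p : 0 < c -> c < G -> 0 < s < 1 -> c < p -> p < G ->
  p ^ 2 < c * G -> lin c G s <= p -> W1f c G s p < wcf G s p -> area c G s p = Gvi c G s p.
Proof.
  intros Hc HcG Hs Hp HpG Hsq Hl HW.
  assert (HG : 0 < G) by lra.
  destruct (VI_order c G s p Hc HcG Hs Hp HpG Hsq Hl HW) as (O1 & O2 & O3 & O4).
  assert (HD := Dq_nonneg_lin c G s p Hc HG Hs Hl).
  assert (Hf := fun w => phi_fact c G s p w Hc HG (proj1 Hs) HD).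
  assert (A : 0 < c * G * s ^ 2) by pos.
  unfold area, Gvi.
  rewrite (split3 (fA c G s p) (dC G s p) (dS c s p) (wcf G s p) (W2f c G s p)); try lra.
  - rewrite RInt_dS by lra. rewrite RInt_dC by lra. ring.
  - apply ex_RInt_fA; lra.
  - intros x Hx. unfold fA. apply Rmax_right.
    eapply Rle_trans. apply Rmin_r. left. apply dC_neg; lra.
  - intros x Hx. unfold fA. assert (HK : 0 < Ks s x) by (apply Ks_pos; lra).
    assert (0 < dC G s p x) by (apply dC_pos; lra).
    rewrite Rmin_right. apply Rmax_left; lra.
    apply dC_le_dS; try lra. rewrite Hf. apply prod3_nonpos; auto.
    rewrite Rmult_comm. apply Rmult_le_0_r; lra.
  - intros x Hx. unfold fA. assert (HK : 0 < Ks s x) by (apply Ks_pos; lra).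
    assert (0 < dS c s p x) by (apply dS_pos; lra).
    rewrite Rmin_left. apply Rmax_left; lra.
    apply dS_le_dC; try lra. rewrite Hf. apply prod3_nonneg; auto.
    apply Rmult_le_pos; lra.
Qed.

Definition Ls (s w : R) : R := (1 - s) * ln w + s * w.

Lemma deriv_V_gen c G s (a b : R -> R) p (a' b' : R) :
  0 < c -> 0 < G -> 0 < s < 1 -> 0 < p -> 0 < a p -> 0 < b p ->
  is_derive a p a' -> is_derive b p b' ->
  phi c G s p (a p) = 0 -> dS c s p (b p) = 0 ->
  is_derive (fun p => (Hs c s p (a p) - Hs c s p (b p)) + (1 - Hc G s p (a p))) p
    (c / p ^ 2 * (Ls s (a p) - Ls s (b p)) + ln (Ks s (a p)) / (G * s)).
Proof.
  intros Hc0 HG Hs0 Hp Ha Hb Da Db Pa Sb.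
  assert (HK : 0 < Ks s (a p)) by (apply Ks_pos; lra).
  assert (HA : dS c s p (a p) = dC G s p (a p)).
  { pose proof (dC_minus_dS c G s p (a p) HG Hp Ha HK) as E. rewrite Pa in E.
    unfold Rdiv in E. rewrite Rmult_0_l in E. lra. }
  assert (exa : ex_derive a p) by (exists a'; auto).
  assert (exb : ex_derive b p) by (exists b'; auto).
  unfold Hs, Hc, Ks. unfold Ks in HK.
  auto_derive.
  - repeat split; auto; lra.
  - replace (Derive (fun x => a x) p) with a' by (symmetry; apply is_derive_unique; auto). replace (Derive (fun x => b x) p) with b' by (symmetry; apply is_derive_unique; auto).
    match goal with |- ?E = _ => replace E with
      (a' * (dS c s p (a p) - dC G s p (a p)) - b' * dS c s p (b p) +
       (c / p ^ 2 * (Ls s (a p) - Ls s (b p)) + ln (Ks s (a p)) / (G * s))) end.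
    + rewrite HA, Sb. unfold Ks. ring.
    + match goal with |- ?x = ?y => change (@eq R x y) end.
      unfold dS, dC, Ls, Ks. change RinvImpl.Rinv with Rinv.
      replace (1 + - ((1 + - a p) * s)) with (1 - (1 - a p) * s) by ring.
      field. repeat split; lra.
Qed.

Lemma deriv_VI_gen c G s (a b : R -> R) p (a' b' : R) :
  0 < c -> 0 < G -> 0 < s < 1 -> 0 < p -> 0 < a p -> 0 < b p ->
  is_derive a p a' -> is_derive b p b' ->
  phi c G s p (a p) = 0 -> dC G s p (b p) = 0 ->
  is_derive (fun p => (Hc G s p (a p) - Hc G s p (b p)) + (1 - c * s / p - Hs c s p (a p))) p
    (- (ln (Ks s (a p)) - ln (Ks s (b p))) / (G * s) + c / p ^ 2 * (s - Ls s (a p))).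
Proof.
  intros Hc0 HG Hs0 Hp Ha Hb Da Db Pa Sb.
  assert (HK : 0 < Ks s (a p)) by (apply Ks_pos; lra).
  assert (HKb : 0 < Ks s (b p)) by (apply Ks_pos; lra).
  assert (HA : dS c s p (a p) = dC G s p (a p)).
  { pose proof (dC_minus_dS c G s p (a p) HG Hp Ha HK) as E. rewrite Pa in E.
    unfold Rdiv in E. rewrite Rmult_0_l in E. lra. }
  assert (exa : ex_derive a p) by (exists a'; auto).
  assert (exb : ex_derive b p) by (exists b'; auto).
  unfold Hs, Hc, Ks. unfold Ks in HK, HKb.
  auto_derive.
  - repeat split; auto; lra.
  - replace (Derive (fun x => a x) p) with a' by (symmetry; apply is_derive_unique; auto). replace (Derive (fun x => b x) p) with b' by (symmetry; apply is_derive_unique; auto).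
    match goal with |- ?E = _ => replace E with
      (a' * (dC G s p (a p) - dS c s p (a p)) - b' * dC G s p (b p) +
       (- (ln (Ks s (a p)) - ln (Ks s (b p))) / (G * s) + c / p ^ 2 * (s - Ls s (a p)))) end.
    + rewrite HA, Sb. unfold Ks. ring.
    + match goal with |- ?x = ?y => change (@eq R x y) end.
      unfold dS, dC, Ls, Ks. change RinvImpl.Rinv with Rinv.
      replace (1 + - ((1 + - a p) * s)) with (1 - (1 - a p) * s) by ring.
      replace (1 + - ((1 + - b p) * s)) with (1 - (1 - b p) * s) by ring.
      field. repeat split; lra.
Qed.

Definition Dv (c G s p : R) : R :=
  c / p ^ 2 * (Ls s (W1f c G s p) - Ls s (wsf c s p)) + ln (Ks s (W1f c G s p)) / (G * s).
Definition Dvi (c G s p : R) : R :=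
  - (ln (Ks s (W2f c G s p)) - ln (Ks s (wcf G s p))) / (G * s) + c / p ^ 2 * (s - Ls s (W2f c G s p)).

Lemma Hc_1 G s p : Hc G s p 1 = 1.
Proof. unfold Hc. rewrite Ks1, ln_1. ring. Qed.
Lemma Hs_1 c s p : p <> 0 -> Hs c s p 1 = 1 - c * s / p.
Proof. intros. unfold Hs. rewrite ln_1. field. auto. Qed.

Lemma GK_wc G s p : 0 < G -> 0 < s < 1 -> G * Ks s (wcf G s p) = p.
Proof. intros. unfold Ks, wcf. field. split; lra. Qed.

Lemma dC_wc G s p : 0 < G -> 0 < s < 1 -> 0 < p -> dC G s p (wcf G s p) = 0.
Proof. intros. unfold dC. rewrite GK_wc by auto. field. lra. Qed.

Lemma ex_derive_W1 c G s p : 0 < c -> 0 < G -> 0 < s -> 0 < Dq c G s p -> ex_derive (W1f c G s) p.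
Proof.
  intros. unfold W1f, Dq in *. auto_derive. repeat split; auto; try (apply Rgt_not_eq; pos); try lra.
Qed.
Lemma ex_derive_W2 c G s p : 0 < c -> 0 < G -> 0 < s -> 0 < Dq c G s p -> ex_derive (W2f c G s) p.
Proof.
  intros. unfold W2f, Dq in *. auto_derive. repeat split; auto; try (apply Rgt_not_eq; pos); try lra.
Qed.
Lemma ex_derive_ws c s p : c * s < p -> ex_derive (wsf c s) p.
Proof. intros. unfold wsf. auto_derive. repeat split; auto. lra. Qed.
Lemma ex_derive_wc G s p : 0 < G -> 0 < s -> ex_derive (wcf G s) p.
Proof. intros. unfold wcf. auto_derive. repeat split; auto; try (apply Rgt_not_eq; pos); try lra. Qed.

Lemma ex_derive_is (f : R -> R) x : ex_derive f x -> is_derive f x (Derive f x).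
Proof. intros. apply Derive_correct. auto. Qed.

Lemma deriv_Gv c G s p : 0 < c -> c < G -> 0 < s < 1 -> c < p -> 0 < Dq c G s p ->
  0 < W1f c G s p -> is_derive (Gv c G s) p (Dv c G s p).
Proof.
  intros Hc0 HcG Hs0 Hp HD HW.
  assert (HG : 0 < G) by lra.
  apply is_derive_ext with (f := fun p => (Hs c s p (W1f c G s p) - Hs c s p (wsf c s p)) + (1 - Hc G s p (W1f c G s p))).
  { intros q. unfold Gv. rewrite Hc_1. reflexivity. }
  unfold Dv.
  apply (deriv_V_gen c G s (W1f c G s) (wsf c s) p (Derive (W1f c G s) p) (Derive (wsf c s) p)); try lra.
  - apply ws_pos; lra.
  - apply ex_derive_is. apply ex_derive_W1; lra.
  - apply ex_derive_is. apply ex_derive_ws. nra.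
  - rewrite phi_fact by lra. ring.
  - apply dS_ws; lra.
Qed.

Lemma deriv_Gvi c G s p : 0 < c -> c < G -> 0 < s < 1 -> 0 < p -> 0 < Dq c G s p ->
  0 < W2f c G s p -> 0 < wcf G s p -> is_derive (Gvi c G s) p (Dvi c G s p).
Proof.
  intros Hc0 HcG Hs0 Hp HD HW Hwc.
  assert (HG : 0 < G) by lra.
  apply is_derive_ext_loc with (f := fun p => (Hc G s p (W2f c G s p) - Hc G s p (wcf G s p)) + (1 - c * s / p - Hs c s p (W2f c G s p))).
  { exists (mkposreal p Hp). intros q Hq. unfold Gvi. rewrite Hs_1. reflexivity.
    unfold ball in Hq; simpl in Hq; unfold AbsRing_ball, abs, minus, plus, opp in Hq; simpl in Hq.
    apply Rabs_def2 in Hq. lra. }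
  unfold Dvi.
  apply (deriv_VI_gen c G s (W2f c G s) (wcf G s) p (Derive (W2f c G s) p) (Derive (wcf G s) p)); try lra.
  - apply ex_derive_is. apply ex_derive_W2; lra.
  - apply ex_derive_is. apply ex_derive_wc; lra.
  - rewrite phi_fact by lra. ring.
  - apply dC_wc; lra.
Qed.

Lemma deriv_pos_right (f : R -> R) x l : is_derive f x l -> 0 < l ->
  forall h, 0 < h -> exists y, x < y < x + h /\ f x < f y.
Proof.
  intros D Hl h Hh. apply is_derive_Reals in D.
  destruct (D (l/2) ltac:(lra)) as [del Hd].
  set (e := Rmin h del / 2).
  assert (M1 : Rmin h del <= h) by apply Rmin_l.
  assert (M2 : Rmin h del <= del) by apply Rmin_r.
  assert (M3 : 0 < Rmin h del) by (apply Rmin_glb_lt; auto; apply cond_pos).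
  assert (He : 0 < e) by (unfold e; lra).
  assert (He2 : e < h /\ e < del) by (unfold e; lra).
  exists (x + e). split. lra.
  specialize (Hd e ltac:(lra) ltac:(rewrite Rabs_right; lra)).
  apply Rabs_def2 in Hd. destruct Hd as [Hd1 Hd2].
  assert (0 < (f (x + e) - f x) / e) by lra.
  assert (0 < f (x + e) - f x).
  { replace (f (x + e) - f x) with ((f (x + e) - f x) / e * e) by (field; lra). nra. }
  lra.
Qed.

Lemma deriv_neg_left (f : R -> R) x l : is_derive f x l -> l < 0 ->
  forall h, 0 < h -> exists y, x - h < y < x /\ f x < f y.
Proof.
  intros D Hl h Hh. apply is_derive_Reals in D.
  destruct (D (- l/2) ltac:(lra)) as [del Hd].
  set (e := Rmin h del / 2).
  assert (M1 : Rmin h del <= h) by apply Rmin_l.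
  assert (M2 : Rmin h del <= del) by apply Rmin_r.
  assert (M3 : 0 < Rmin h del) by (apply Rmin_glb_lt; auto; apply cond_pos).
  assert (He : 0 < e) by (unfold e; lra).
  assert (He2 : e < h /\ e < del) by (unfold e; lra).
  exists (x - e). split. lra.
  specialize (Hd (- e) ltac:(lra) ltac:(rewrite Rabs_left; lra)).
  apply Rabs_def2 in Hd. destruct Hd as [Hd1 Hd2].
  replace (x + - e) with (x - e) in * by ring.
  assert ((f (x - e) - f x) / - e < 0) by lra.
  assert (0 < f (x - e) - f x).
  { replace (f (x - e) - f x) with (- ((f (x - e) - f x) / - e * e)) by (field; lra). nra. }
  lra.
Qed.

Lemma deriv_zero_max (f : R -> R) x l h : is_derive f x l -> 0 < h ->
  (forall y, x - h < y < x + h -> f y <= f x) -> l = 0.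
Proof.
  intros D Hh Hm.
  destruct (Rtotal_order l 0) as [Hl | [Hl | Hl]]; auto.
  - destruct (deriv_neg_left f x l D Hl h Hh) as [y [Hy Hf]].
    specialize (Hm y ltac:(lra)). lra.
  - destruct (deriv_pos_right f x l D Hl h Hh) as [y [Hy Hf]].
    specialize (Hm y ltac:(lra)). lra.
Qed.

Lemma RInt_lin m k : m <= 1 -> RInt (fun x => k * (1 - x)) m 1 = k * (1 - m) ^ 2 / 2.
Proof.
  intros Hm. apply is_RInt_unique.
  replace (k * (1 - m) ^ 2 / 2) with (minus ((fun x => k * (x - x^2/2)) 1) ((fun x => k * (x - x^2/2)) m))
    by (unfold minus, plus, opp; simpl; field).
  apply (is_RInt_derive (V:=R_CompleteNormedModule) (fun x => k * (x - x^2/2))).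
  - intros x _. auto_derive. auto. match goal with |- ?x = ?y => change (@eq R x y) end. change RinvImpl.Rinv with Rinv. field.
  - intros x _. apply (ex_derive_continuous (K:=R_AbsRing) (V:=R_NormedModule)). auto_derive. auto.
Qed.

Lemma RInt_lt_split (f g : R -> R) m k :
  0 <= m < 1 -> 0 < k -> ex_RInt f 0 1 -> ex_RInt g 0 1 ->
  (forall x, 0 < x < m -> f x <= g x) ->
  (forall x, m < x < 1 -> f x + k * (1 - x) <= g x) ->
  RInt f 0 1 < RInt g 0 1.
Proof.
  intros Hm Hk Ef Eg H1 H2.
  assert (Ef1 : ex_RInt f 0 m) by (apply (ex_RInt_Chasles_1 (V:=R_CompleteNormedModule)) with 1; auto; lra).
  assert (Ef2 : ex_RInt f m 1) by (apply (ex_RInt_Chasles_2 (V:=R_CompleteNormedModule)) with 0; auto; lra).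
  assert (Eg1 : ex_RInt g 0 m) by (apply (ex_RInt_Chasles_1 (V:=R_CompleteNormedModule)) with 1; auto; lra).
  assert (Eg2 : ex_RInt g m 1) by (apply (ex_RInt_Chasles_2 (V:=R_CompleteNormedModule)) with 0; auto; lra).
  rewrite <- (RInt_Chasles f 0 m 1) by auto.
  rewrite <- (RInt_Chasles g 0 m 1) by auto.
  unfold plus; simpl.
  assert (A1 : RInt f 0 m <= RInt g 0 m) by (apply RInt_le; auto; lra).
  assert (El : ex_RInt (fun x => k * (1 - x)) m 1).
  { apply (ex_RInt_continuous (V:=R_CompleteNormedModule)). intros z _.
    apply (ex_derive_continuous (K:=R_AbsRing) (V:=R_NormedModule)). auto_derive. auto. }
  assert (A2 : RInt (fun x => f x + k * (1 - x)) m 1 <= RInt g m 1).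
  { apply RInt_le; [lra | | auto | ].
    apply (ex_RInt_plus (V:=R_CompleteNormedModule) f (fun x => k * (1 - x))); auto.
    intros x Hx. apply H2. lra. }
  rewrite (RInt_plus (V:=R_CompleteNormedModule) f (fun x => k * (1 - x))) in A2 by auto.
  rewrite RInt_lin in A2 by lra. unfold plus in A2; simpl in A2.
  assert (0 < k * (1 - m) ^ 2 / 2).
  { apply Rdiv_lt_0_compat; [|lra]. apply Rmult_lt_0_compat; auto. apply pow_lt; lra. }
  lra.
Qed.

Lemma fA_le_dS c G s p w : fA c G s p w <= Rmax (dS c s p w) 0.
Proof. unfold fA. apply Rle_max_compat_r. apply Rmin_l. Qed.
Lemma fA_le_dC c G s p w : fA c G s p w <= Rmax (dC G s p w) 0.
Proof. unfold fA. apply Rle_max_compat_r. apply Rmin_r. Qed.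

Lemma dS_incr c s p s' p' x : 0 < c -> 0 < s <= s' -> s' < 1 -> 0 < p <= p' -> 0 < x < 1 ->
  dS c s p x + c * ((1 - s) * (1/p - 1/p') + (s' - s) / p') * (1 - x) <= dS c s' p' x.
Proof.
  intros Hc Hs Hs' Hp Hx.
  set (d1 := 1/p - 1/p'). set (d2 := (s' - s)/p').
  assert (D1 : 0 <= d1). { unfold d1. assert (/p' <= /p) by (apply Rinv_le_contravar; lra). unfold Rdiv; lra. }
  assert (D2 : 0 <= d2) by (unfold d2; apply Rdiv_le_0_compat; lra).
  assert (E : dS c s' p' x - dS c s p x = c * (Ks s x * d1 + (1 - x) * d2) / x).
  { unfold dS, Ks, d1, d2. field. lra. }
  assert (HK : 1 - s <= Ks s x) by (unfold Ks; nra).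
  set (y := Ks s x * d1 + (1 - x) * d2) in *.
  assert (Y0 : (1 - s) * (1 - x) * d1 + (1 - x) * d2 <= y).
  { unfold y. assert ((1-s)*(1-x) <= Ks s x) by nra. nra. }
  assert (Y1 : 0 <= y).
  { unfold y. assert (0 <= Ks s x * d1) by (apply Rmult_le_pos; lra).
    assert (0 <= (1-x)*d2) by (apply Rmult_le_pos; lra). lra. }
  assert (Cy : 0 <= c * y) by (apply Rmult_le_pos; lra).
  assert (c * y <= c * y / x). { apply (proj1 (Rle_div_r (c*y) (c*y) x ltac:(lra))). rewrite <- (Rmult_1_r (c*y)) at 2. apply Rmult_le_compat_l; lra. }
  assert (c * ((1 - s) * d1 + d2) * (1 - x) = c * ((1 - s) * (1 - x) * d1 + (1 - x) * d2)) by ring.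
  assert (c * ((1 - s) * (1 - x) * d1 + (1 - x) * d2) <= c * y) by (apply Rmult_le_compat_l; lra).
  lra.
Qed.

Lemma dC_incr G s p s' p' x : 0 < G -> 0 < s' <= s -> s < 1 -> 0 < p' <= p -> 0 < x < 1 ->
  dC G s p x + ((p - p') + p' * (s - s')) / G * (1 - x) <= dC G s' p' x.
Proof.
  intros HG Hs Hs' Hp Hx.
  assert (K1 : 0 < Ks s x) by (apply Ks_pos; lra).
  assert (K2 : 0 < Ks s' x) by (apply Ks_pos; lra).
  assert (K1' : Ks s x <= 1) by (unfold Ks; nra).
  assert (K2' : Ks s' x <= 1) by (unfold Ks; nra).
  assert (E : dC G s' p' x - dC G s p x = ((p - p') / Ks s x + p' * ((1 - x) * (s - s')) / (Ks s x * Ks s' x)) / G).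
  { unfold dC, Ks in *. field. repeat split; lra. }
  assert (A1 : (p - p') * (1 - x) <= (p - p') / Ks s x).
  { apply (proj1 (Rle_div_r ((p-p')*(1-x)) (p-p') (Ks s x) K1)).
    assert ((1-x)*Ks s x <= 1) by nra. nra. }
  assert (A2 : p' * (1 - x) * (s - s') <= p' * ((1 - x) * (s - s')) / (Ks s x * Ks s' x)).
  { apply (proj1 (Rle_div_r (p' * (1 - x) * (s - s')) (p' * ((1 - x) * (s - s'))) (Ks s x * Ks s' x) ltac:(nra))).
    assert (0 <= p' * ((1 - x) * (s - s'))) by (apply Rmult_le_pos; nra).
    assert (Ks s x * Ks s' x <= 1) by nra.
    replace (p' * (1 - x) * (s - s')) with (p' * ((1 - x) * (s - s'))) by ring. nra. }
  assert (((p - p') + p' * (s - s')) / G * (1 - x) = ((p - p') * (1 - x) + p' * (1 - x) * (s - s')) / G) by (field; lra).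
  assert (((p - p') * (1 - x) + p' * (1 - x) * (s - s')) / G <= ((p - p') / Ks s x + p' * ((1 - x) * (s - s')) / (Ks s x * Ks s' x)) / G).
  { unfold Rdiv. apply Rmult_le_compat_r. left; apply Rinv_0_lt_compat; lra. lra. }
  lra.
Qed.

Lemma PD_witness c G s p s' p' : 0 < c -> c < G -> 0 < s <= s' -> s' < 1 -> c < p <= p' -> p' < G ->
  (s < s' \/ p < p') ->
  (forall w, 0 < w < 1 -> 0 < dS c s' p' w -> 0 <= phi c G s' p' w) ->
  area c G s p < area c G s' p'.
Proof.
  intros Hc HcG Hs Hs' Hp Hp' Hlt Hpure.
  assert (HG : 0 < G) by lra.
  apply Rle_lt_trans with (RInt (fun w => Rmax (dS c s p w) 0) 0 1).
  { apply RInt_le. lra. apply ex_RInt_fA; lra. apply ex_RInt_dSp; lra. intros; apply fA_le_dS. }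
  replace (area c G s' p') with (RInt (fun w => Rmax (dS c s' p' w) 0) 0 1).
  2: { unfold area. apply RInt_ext. intros x Hx. rewrite Rmin_left in Hx by lra. rewrite Rmax_right in Hx by lra.
       unfold fA. destruct (Rle_lt_dec (dS c s' p' x) 0).
       - rewrite !Rmax_right; auto. eapply Rle_trans; [apply Rmin_l|]; auto.
       - rewrite Rmin_left. auto. apply dS_le_dC; try lra. apply Ks_pos; lra. apply Hpure; auto. }
  set (k := c * ((1 - s) * (1/p - 1/p') + (s' - s) / p')).
  assert (Hk : 0 < k).
  { unfold k. apply Rmult_lt_0_compat; auto.
    assert (/p' <= /p) by (apply Rinv_le_contravar; lra).
    destruct Hlt.
    - assert (0 < (s' - s)/p') by (apply Rdiv_lt_0_compat; lra). nra.
    - assert (/p' < /p) by (apply Rinv_lt_contravar; nra).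
      assert (0 <= (s' - s)/p') by (apply Rdiv_le_0_compat; lra). nra. }
  apply RInt_lt_split with (m := wsf c s p) (k := k).
  - split. left; apply ws_pos; lra. apply ws_lt1; lra.
  - auto.
  - apply ex_RInt_dSp; lra.
  - apply ex_RInt_dSp; lra.
  - intros x Hx. rewrite (Rmax_right (dS c s p x)). apply Rmax_r. left; apply dS_neg; lra.
  - intros x Hx. assert (0 < dS c s p x) by (apply dS_pos; lra).
    rewrite (Rmax_left (dS c s p x)) by lra.
    assert (0 < wsf c s p) by (apply ws_pos; lra).
    eapply Rle_trans. apply (dS_incr c s p s' p' x); try lra. apply Rmax_l.
Qed.

Lemma PC_witness c G s p s' p' : 0 < c -> c < G -> 0 < s' <= s -> s < 1 -> c < p' <= p -> p < G ->
  (s' < s \/ p' < p) ->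
  (forall w, 0 < w < 1 -> 0 < dC G s' p' w -> phi c G s' p' w <= 0) ->
  area c G s p < area c G s' p'.
Proof.
  intros Hc HcG Hs Hs' Hp Hp' Hlt Hpure.
  assert (HG : 0 < G) by lra.
  apply Rle_lt_trans with (RInt (fun w => Rmax (dC G s p w) 0) 0 1).
  { apply RInt_le. lra. apply ex_RInt_fA; lra. apply ex_RInt_dCp; lra. intros; apply fA_le_dC. }
  replace (area c G s' p') with (RInt (fun w => Rmax (dC G s' p' w) 0) 0 1).
  2: { unfold area. apply RInt_ext. intros x Hx. rewrite Rmin_left in Hx by lra. rewrite Rmax_right in Hx by lra.
       unfold fA. destruct (Rle_lt_dec (dC G s' p' x) 0).
       - rewrite !Rmax_right; auto. eapply Rle_trans; [apply Rmin_r|]; auto.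
       - rewrite Rmin_right. auto. apply dC_le_dS; try lra. apply Ks_pos; lra. apply Hpure; auto. }
  set (k := ((p - p') + p' * (s - s')) / G).
  assert (Hk : 0 < k).
  { unfold k. apply Rdiv_lt_0_compat; auto. destruct Hlt; nra. }
  apply RInt_lt_split with (m := Rmax (wcf G s p) 0) (k := k).
  - split. apply Rmax_r. apply Rmax_lub_lt. apply wc_lt1; lra. lra.
  - auto.
  - apply ex_RInt_dCp; lra.
  - apply ex_RInt_dCp; lra.
  - intros x Hx. assert (x < wcf G s p).
    { destruct Hx as [Hx0 Hx]. destruct (Rle_dec (wcf G s p) 0) as [h|h];
      [rewrite Rmax_right in Hx by lra | rewrite Rmax_left in Hx by lra]; lra. }
    rewrite (Rmax_right (dC G s p x)). apply Rmax_r. left; apply dC_neg; lra.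
  - intros x Hx. assert (wcf G s p < x) by (eapply Rle_lt_trans; [apply Rmax_l| apply Hx]).
    assert (0 < x) by (eapply Rle_lt_trans; [apply Rmax_r| apply Hx]).
    assert (0 < dC G s p x) by (apply dC_pos; lra).
    rewrite (Rmax_left (dC G s p x)) by lra.
    eapply Rle_trans. apply (dC_incr G s p s' p' x); try lra. apply Rmax_l.
Qed.

Lemma dS_pos_inv c s p w : 0 < c -> 0 < s < 1 -> c < p -> 0 < w -> 0 < dS c s p w -> wsf c s p < w.
Proof.
  intros. destruct (Rlt_le_dec (wsf c s p) w) as [h|h]; auto.
  destruct h as [h|h]. pose proof (dS_neg c s p w H H0 H1 (conj H2 h)). lra.
  subst w. rewrite dS_ws in H3 by auto. lra.
Qed.

Lemma dC_pos_inv G s p w : 0 < G -> 0 < s < 1 -> 0 < p -> 0 <= w -> 0 < dC G s p w -> wcf G s p < w.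
Proof.
  intros. destruct (Rlt_le_dec (wcf G s p) w) as [h|h]; auto.
  destruct h as [h|h]. pose proof (dC_neg G s p w H H0 (conj H2 h)). lra.
  subst w. rewrite dC_wc in H3 by auto. lra.
Qed.

Lemma pure_alpha c G s p w : 0 < c -> 0 < G -> 0 < s -> Dq c G s p < 0 -> 0 <= phi c G s p w.
Proof.
  intros Hc HG Hs HD.
  set (A := c * G * s ^ 2). set (B := 2 * c * G * s * (1 - s) - p ^ 2).
  assert (HA : 0 < A) by (unfold A; pos).
  assert (E : 4 * A * phi c G s p w = (2 * A * w + B) ^ 2 + p ^ 2 * (- Dq c G s p)).
  { unfold A, B, phi, Dq, Ks. ring. }
  assert (0 <= (2 * A * w + B) ^ 2) by apply pow2_ge_0.
  assert (0 <= p ^ 2 * (- Dq c G s p)) by (apply Rmult_le_pos; [apply pow2_ge_0|lra]).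
  destruct (Rle_lt_dec 0 (phi c G s p w)); auto.
  assert (4 * A * phi c G s p w < 0). { apply Rmult_lt_gt_compat_neg_l with (r := phi c G s p w) in HA; lra. }
  lra.
Qed.

Lemma pure_beta c G s p w : 0 < c -> 0 < G -> 0 < s <= 1/2 -> 0 < p -> p ^ 2 <= c * G -> 0 <= w <= 1 ->
  0 <= phi c G s p w.
Proof.
  intros Hc HG Hs Hp Hsq Hw.
  assert (E : Ks s w ^ 2 - w = (1 - w) * (1 - 2 * s + s ^ 2 * (1 - w))) by (unfold Ks; ring).
  assert (0 <= (1 - w) * (1 - 2 * s + s ^ 2 * (1 - w))).
  { apply Rmult_le_pos. lra. assert (0 <= s^2*(1-w)) by (apply Rmult_le_pos; [apply pow2_ge_0|lra]). lra. }
  assert (p ^ 2 * w <= c * G * w) by (apply Rmult_le_compat_r; lra).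
  assert (c * G * w <= c * G * Ks s w ^ 2) by (apply Rmult_le_compat_l; nra).
  unfold phi. lra.
Qed.

Lemma pure_gamma c G s p w : 0 < c -> 0 < G -> 0 < s < 1 -> c < p -> G * (1 - s) <= c * s ->
  p <= lin c G s -> wsf c s p <= w -> 0 <= phi c G s p w.
Proof.
  intros Hc HG Hs Hp Hsg Hl Hw.
  set (ws := wsf c s p) in *.
  set (Kws := Ks s ws).
  assert (EK : Kws = p * ws / c) by (apply Ks_ws; auto).
  assert (Hws : 0 < ws) by (apply ws_pos; auto).
  assert (Hcg : c / G <= ws) by (apply ws_ge_cG; auto).
  assert (Gws : c <= G * ws).
  { apply Rmult_le_compat_l with (r:=G) in Hcg; [|lra]. replace (G*(c/G)) with c in Hcg by (field; lra). lra. }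
  assert (T : phi c G s p w = phi c G s p ws + (2 * c * G * s * Kws - p ^ 2) * (w - ws) + c * G * s ^ 2 * (w - ws) ^ 2).
  { unfold phi, Kws, Ks. ring. }
  assert (P0 : 0 <= phi c G s p ws).
  { rewrite phi_ws by auto. fold ws Kws. rewrite EK.
    replace (c * (p * ws / c) * (G * (p * ws / c) - p)) with (p * ws * (p * (G * ws - c) / c)) by (field; lra).
    apply Rmult_le_pos. nra. apply Rdiv_le_0_compat; nra. }
  assert (P1 : 0 <= 2 * c * G * s * Kws - p ^ 2).
  { rewrite EK. replace (2 * c * G * s * (p * ws / c) - p ^ 2) with (p * (2 * G * s * ws - p)) by (field; lra).
    apply Rmult_le_pos. lra.
    unfold ws, wsf. unfold lin in Hl.
    assert (0 < p - c * s) by nra.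
    set (a := G * (1 - s)) in *. set (b := c * s) in *.
    assert (Hab : c * G * s * (1 - s) = a * b) by (unfold a, b; ring).
    assert (F : p ^ 2 - b * p - 2 * a * b <= 0).
    { assert (0 <= a) by (unfold a; nra).
      assert (E2 : p ^ 2 - b * p - 2 * a * b = a * (a - b) - (a + b - p) * (a + p)) by ring.
      assert (0 <= (a + b - p) * (a + p)) by (apply Rmult_le_pos; lra).
      assert (a * (a - b) <= 0) by (apply Rmult_le_0_l; lra). lra. }
    replace (2 * G * s * (c * (1 - s) / (p - b)) - p) with ((2 * a * b - p * (p - b)) / (p - b)).
    2: { unfold a, b in *. field. lra. }
    apply Rdiv_le_0_compat; lra. }
  assert (0 <= (2 * c * G * s * Kws - p ^ 2) * (w - ws)) by (apply Rmult_le_pos; lra).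
  assert (0 <= c * G * s ^ 2 * (w - ws) ^ 2) by (apply Rmult_le_pos; [left; pos|apply pow2_ge_0]).
  lra.
Qed.

Lemma pure_dc c G s p w : 0 < c -> 0 < G -> 0 < s < 1 -> c < p -> c * G <= p ^ 2 ->
  lin c G s <= p -> wcf G s p < w -> w <= 1 -> phi c G s p w <= 0.
Proof.
  intros Hc HG Hs Hp Hsq Hl Hw Hw1.
  set (wc := wcf G s p) in *.
  assert (Hwc1 : wc < 1) by lra.
  assert (P0 : phi c G s p wc <= 0).
  { unfold wc. rewrite phi_wc by auto. apply Rmult_le_0_l. apply pow2_ge_0.
    pose proof (wc_ge_cG c G s p Hc HG Hs Hl). unfold wc in *. lra. }
  assert (P1 : phi c G s p 1 <= 0) by (unfold phi; rewrite Ks1; ring_simplify; lra).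
  assert (E : phi c G s p w * (1 - wc) = phi c G s p wc * (1 - w) + phi c G s p 1 * (w - wc)
              + c * G * s ^ 2 * (w - wc) * (w - 1) * (1 - wc)).
  { unfold phi, Ks. ring. }
  assert (phi c G s p wc * (1 - w) <= 0) by (apply Rmult_le_0_r; lra).
  assert (phi c G s p 1 * (w - wc) <= 0) by (apply Rmult_le_0_r; lra).
  assert (c * G * s ^ 2 * (w - wc) * (w - 1) * (1 - wc) <= 0).
  { assert (0 < c * G * s ^ 2) by pos.
    assert (0 <= c * G * s ^ 2 * (w - wc)) by (apply Rmult_le_pos; lra).
    assert (c * G * s ^ 2 * (w - wc) * (w - 1) <= 0) by (apply Rmult_le_0_l; lra).
    apply Rmult_le_0_r; lra. }
  destruct (Rle_lt_dec (phi c G s p w) 0); auto.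
  assert (0 < phi c G s p w * (1 - wc)) by (apply Rmult_lt_0_compat; lra). lra.
Qed.

Lemma sr_st t s : 0 < t -> sr t (s * t) = s.
Proof. intros. unfold sr. field. lra. Qed.

Lemma sqrt_lt_iff x p : 0 <= x -> 0 < p -> (p < sqrt x <-> p ^ 2 < x).
Proof.
  intros Hx Hp. pose proof (sqrt_sqrt x Hx). pose proof (sqrt_pos x). split; intros; nra.
Qed.
Lemma sqrt_gt_iff x p : 0 <= x -> 0 < p -> (sqrt x < p <-> x < p ^ 2).
Proof.
  intros Hx Hp. pose proof (sqrt_sqrt x Hx). pose proof (sqrt_pos x). split; intros; nra.
Qed.

Lemma region_IV_s c G t s p : 0 < c -> c < G -> 0 < t -> 0 < s < 1 -> c < p < G ->
  4 * c * G * s * (1 - s) <= p ^ 2 -> p < lin c G s -> p ^ 2 < c * G -> 1/2 < s < G / (G + c) ->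
  region_IV c G t (s * t) p.
Proof.
  intros. unfold region_IV. cbv zeta. rewrite sr_st by auto. unfold inD, lin in *.
  repeat split; try lra; try nra.
  apply sqrt_lt_iff; nra.
Qed.

Lemma in_closure_intro (P : R -> R -> Prop) t s p : 0 < t ->
  (forall eps, 0 < eps -> exists s' p', P (s' * t) p' /\ Rabs (s - s') * t < eps /\ Rabs (p - p') < eps) ->
  in_closure P (s * t) p.
Proof.
  intros Ht H eps Heps. destruct (H eps Heps) as (s' & p' & HP & H1 & H2).
  exists (s' * t), p'. split; auto. split; auto.
  replace (s * t - s' * t) with ((s - s') * t) by ring. rewrite Rabs_mult, (Rabs_right t) by lra. auto.
Qed.

Lemma lt_GGc c G s : 0 < c -> 0 < G -> (s < G / (G + c) <-> c * s < G * (1 - s)).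
Proof.
  intros. split; intros H1.
  - apply Rlt_div_r in H1; [|lra]. lra.
  - apply Rlt_div_r; lra.
Qed.
Lemma le_GGc c G s : 0 < c -> 0 < G -> (G / (G + c) <= s <-> G * (1 - s) <= c * s).
Proof.
  intros. split; intros H1.
  - apply Rle_div_l in H1; [|lra]. lra.
  - apply Rle_div_l; lra.
Qed.

Lemma Rmin_pos a b : 0 < a -> 0 < b -> 0 < Rmin a b.
Proof. intros; apply Rmin_glb_lt; auto. Qed.

Lemma closure_i_gt c G t s p : 0 < c -> c < G -> 0 < t -> c < p < G ->
  p ^ 2 = c * G -> p <= lin c G s -> 1/2 < s -> c * s < G * (1 - s) -> s < 1 ->
  in_closure (region_IV c G t) (s * t) p.
Proof.
  intros Hc HcG Ht Hp Hsq Hl Hs1 Hs2 Hs3.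
  apply in_closure_intro; auto. intros eps Heps.
  set (m := p ^ 2 - 4 * c * G * s * (1 - s)).
  assert (Hm : 0 < m).
  { unfold m. rewrite Hsq. replace (c * G - 4 * c * G * s * (1 - s)) with (c * G * (2 * s - 1) ^ 2) by ring.
    apply Rmult_lt_0_compat. nra. apply pow_lt. lra. }
  set (d := Rmin (eps / 2) (Rmin (m / (2 * p)) ((p - c) / 2))).
  assert (Hd : 0 < d) by (unfold d; repeat apply Rmin_pos; try lra; apply Rdiv_lt_0_compat; lra).
  assert (Hd1 : d <= eps / 2) by (unfold d; apply Rmin_l).
  assert (Hd2 : d <= m / (2 * p)) by (unfold d; eapply Rle_trans; [apply Rmin_r|apply Rmin_l]).
  assert (Hd3 : d <= (p - c) / 2) by (unfold d; eapply Rle_trans; [apply Rmin_r|apply Rmin_r]).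
  assert (Hd2' : 2 * p * d <= m).
  { apply Rmult_le_compat_l with (r := 2 * p) in Hd2; [|lra]. replace (2 * p * (m / (2 * p))) with m in Hd2 by (field; lra). lra. }
  exists s, (p - d). split; [|split].
  - apply region_IV_s; try lra.
    + unfold m in Hd2'. nra.
    + nra.
    + split; [lra | apply lt_GGc; lra].
  - replace (s - s) with 0 by ring. rewrite Rabs_R0. lra.
  - replace (p - (p - d)) with d by ring. rewrite Rabs_right; lra.
Qed.

Lemma closure_i_half c G t p : 0 < c -> c < G -> 0 < t -> c < p < G ->
  p ^ 2 = c * G -> in_closure (region_IV c G t) ((1/2) * t) p.
Proof.
  intros Hc HcG Ht Hp Hsq.
  apply in_closure_intro; auto. intros eps Heps.
  set (gap := (G + c) / 2 - p).
  assert (Hgap : 0 < gap).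
  { unfold gap. assert (((G + c) / 2) ^ 2 - p ^ 2 = ((G - c) / 2) ^ 2) by (rewrite Hsq; field).
    assert (0 < ((G - c) / 2) ^ 2) by (apply pow_lt; lra). nra. }
  set (q := G / (G + c) - 1/2).
  assert (Hq : 0 < q).
  { unfold q. assert (1/2 < G / (G + c)). { apply (proj1 (Rlt_div_r (1/2) G (G+c) ltac:(lra))). lra. } lra. }
  set (eta := Rmin (eps / (2 * t)) (Rmin (q / 2) (gap / (2 * (G - c))))).
  assert (He : 0 < eta) by (unfold eta; repeat apply Rmin_pos; apply Rdiv_lt_0_compat; lra).
  assert (He1 : eta <= eps / (2 * t)) by (unfold eta; apply Rmin_l).
  assert (He2 : eta <= q / 2) by (unfold eta; eapply Rle_trans; [apply Rmin_r|apply Rmin_l]).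
  assert (He3 : eta <= gap / (2 * (G - c))) by (unfold eta; eapply Rle_trans; [apply Rmin_r|apply Rmin_r]).
  set (d := Rmin (2 * c * G * eta ^ 2 / p) (Rmin (eps / 2) ((p - c) / 2))).
  assert (Hd : 0 < d).
  { unfold d; repeat apply Rmin_pos; try (apply Rdiv_lt_0_compat; lra).
    apply Rdiv_lt_0_compat; [|lra]. pos. }
  assert (Hd1 : d <= 2 * c * G * eta ^ 2 / p) by (unfold d; apply Rmin_l).
  assert (Hd2 : d <= eps / 2) by (unfold d; eapply Rle_trans; [apply Rmin_r|apply Rmin_l]).
  assert (Hd3 : d <= (p - c) / 2) by (unfold d; eapply Rle_trans; [apply Rmin_r|apply Rmin_r]).
  assert (Hd1' : p * d <= 2 * c * G * eta ^ 2).
  { apply Rmult_le_compat_l with (r := p) in Hd1; [|lra]. replace (p * (2 * c * G * eta ^ 2 / p)) with (2 * c * G * eta ^ 2) in Hd1 by (field; lra). lra. }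
  assert (He3' : 2 * (G - c) * eta <= gap).
  { apply Rmult_le_compat_l with (r := 2 * (G - c)) in He3; [|lra]. replace (2 * (G - c) * (gap / (2 * (G - c)))) with gap in He3 by (field; lra). lra. }
  assert (He1' : eta * t <= eps / 2).
  { apply Rmult_le_compat_r with (r := t) in He1; [|lra]. replace (eps / (2 * t) * t) with (eps / 2) in He1 by (field; lra). lra. }
  assert (Hs' : 1/2 + eta < G / (G + c)) by (unfold q in He2; lra).
  assert (HG1 : G / (G + c) < 1) by (apply Rlt_div_l; lra).
  exists (1/2 + eta), (p - d). split; [|split].
  - apply region_IV_s; try lra.
    + replace (4 * c * G * (1 / 2 + eta) * (1 - (1 / 2 + eta))) with (c * G - 4 * c * G * eta ^ 2) by field.
      rewrite <- Hsq. nra.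
    + unfold lin. unfold gap in He3'. nra.
    + nra.
  - replace (1/2 - (1/2 + eta)) with (- eta) by ring. rewrite Rabs_Ropp, Rabs_right; lra.
  - replace (p - (p - d)) with d by ring. rewrite Rabs_right; lra.
Qed.

Lemma closure_ii c G t s p : 0 < c -> c < G -> 0 < t -> c < p < G ->
  p = lin c G s -> p ^ 2 < c * G -> 1/2 < s -> c * s <= G * (1 - s) -> s < 1 ->
  in_closure (region_IV c G t) (s * t) p.
Proof.
  intros Hc HcG Ht Hp Hl Hsq Hs1 Hs2 Hs3.
  apply in_closure_intro; auto. intros eps Heps.
  set (r := sqrt (c * G)).
  assert (Hr2 : r * r = c * G) by (apply sqrt_sqrt; nra).
  assert (Hr0 : 0 <= r) by apply sqrt_pos.
  assert (Hpr : p < r) by nra.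
  assert (HrG : r < G) by nra.
  set (M := (G - c) + (G + c) ^ 2 / (2 * G)).
  assert (HM : 0 < M) by (unfold M; assert (0 < (G + c) ^ 2 / (2 * G)) by (apply Rdiv_lt_0_compat; [apply pow_lt|]; lra); lra).
  set (e := Rmin (eps / (2 * t)) (Rmin ((s - 1/2) / 2) (Rmin 1 (Rmin ((r - p) / (2 * (G - c)))
             (Rmin (G * (p - c) / (G + c) ^ 2) (eps / (2 * M))))))).
  assert (He : 0 < e).
  { unfold e; repeat apply Rmin_pos; try lra; apply Rdiv_lt_0_compat; try lra; try pos. }
  assert (He1 : e <= eps / (2 * t)) by (unfold e; apply Rmin_l).
  assert (He2 : e <= (s - 1/2) / 2) by (unfold e; eapply Rle_trans; [apply Rmin_r|apply Rmin_l]).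
  assert (He3 : e <= 1) by (unfold e; do 2 (eapply Rle_trans; [apply Rmin_r|]); apply Rmin_l).
  assert (He4 : e <= (r - p) / (2 * (G - c))) by (unfold e; do 3 (eapply Rle_trans; [apply Rmin_r|]); apply Rmin_l).
  assert (He5 : e <= G * (p - c) / (G + c) ^ 2) by (unfold e; do 4 (eapply Rle_trans; [apply Rmin_r|]); apply Rmin_l).
  assert (He6 : e <= eps / (2 * M)) by (unfold e; do 4 (eapply Rle_trans; [apply Rmin_r|]); apply Rmin_r).
  clearbody e.
  assert (He1' : e * t <= eps / 2).
  { apply Rmult_le_compat_r with (r := t) in He1; [|lra]. replace (eps / (2 * t) * t) with (eps / 2) in He1 by (field; lra). lra. }
  assert (He4' : 2 * (G - c) * e <= r - p).
  { apply Rmult_le_compat_l with (r := 2 * (G - c)) in He4; [|lra]. replace (2 * (G - c) * ((r - p) / (2 * (G - c)))) with (r - p) in He4 by (field; lra). lra. }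
  assert (He5' : (G + c) ^ 2 * e <= G * (p - c)).
  { apply Rmult_le_compat_l with (r := (G + c) ^ 2) in He5; [|left; apply pow_lt; lra].
    replace ((G + c) ^ 2 * (G * (p - c) / (G + c) ^ 2)) with (G * (p - c)) in He5 by (field; lra). lra. }
  assert (He6' : M * e <= eps / 2).
  { apply Rmult_le_compat_l with (r := M) in He6; [|lra]. replace (M * (eps / (2 * M))) with (eps / 2) in He6 by (field; lra). lra. }
  set (s' := s - e).
  set (L := lin c G s').
  assert (EL : L = p + (G - c) * e) by (unfold L, s', lin; rewrite Hl; unfold lin; ring).
  set (k := (G + c) ^ 2 * e ^ 2 / (2 * G)).
  assert (Hk0 : 0 < k) by (unfold k; apply Rdiv_lt_0_compat; [apply Rmult_lt_0_compat; apply pow_lt|]; lra).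
  assert (Hk1 : k <= (G + c) ^ 2 * e / (2 * G)).
  { unfold k. unfold Rdiv. apply Rmult_le_compat_r. left; apply Rinv_0_lt_compat; lra.
    apply Rmult_le_compat_l. left; apply pow_lt; lra. simpl. nra. }
  assert (Hk2 : k <= (p - c) / 2).
  { eapply Rle_trans; [apply Hk1|]. apply frac_le; lra. }
  assert (HLG : L <= G) by (unfold L, lin, s'; nra).
  assert (Hge : 0 < (G - c) * e) by (apply Rmult_lt_0_compat; lra).
  assert (Hp1 : c < L - k < G) by lra.
  assert (Hdisc : 4 * c * G * s' * (1 - s') <= (L - k) ^ 2).
  { assert (Ediff : L ^ 2 - 4 * c * G * s' * (1 - s') = (G - (G + c) * s') ^ 2) by (unfold L, lin; ring).
    assert (Hpos : (G + c) * e <= G - (G + c) * s') by (unfold s'; nra).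
    assert (((G + c) * e) ^ 2 <= (G - (G + c) * s') ^ 2) by (apply pow_incr; split; [|auto]; nra).
    assert (2 * k * L <= (G + c) ^ 2 * e ^ 2).
    { unfold k. replace (2 * ((G + c) ^ 2 * e ^ 2 / (2 * G)) * L) with ((G + c) ^ 2 * e ^ 2 * (L / G)) by (field; lra).
      assert (L / G <= 1) by (apply Rle_div_l; lra).
      assert (0 <= (G + c) ^ 2 * e ^ 2) by (apply Rmult_le_pos; apply pow2_ge_0). nra. }
    assert ((L - k) ^ 2 = L ^ 2 - 2 * k * L + k ^ 2) by ring.
    assert (0 <= k ^ 2) by apply pow2_ge_0.
    replace (((G + c) * e) ^ 2) with ((G + c) ^ 2 * e ^ 2) in * by ring. lra. }
  assert (Hlin : L - k < lin c G s') by (unfold L; lra).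
  assert (Hsq' : (L - k) ^ 2 < c * G).
  { assert (L - k < r) by lra. assert (0 < L - k) by lra. nra. }
  assert (Hss : 1/2 < s' < G / (G + c)).
  { split. unfold s'; lra. apply lt_GGc; try lra. unfold s'. nra. }
  exists s', (L - k). split; [|split].
  - apply region_IV_s; auto; unfold s'; lra.
  - unfold s'. replace (s - (s - e)) with e by ring. rewrite Rabs_right; lra.
  - rewrite EL. replace (p - (p + (G - c) * e - k)) with (k - (G - c) * e) by ring.
    apply Rle_lt_trans with (k + (G - c) * e).
    + apply Rabs_le. split; nra.
    + assert (k + (G - c) * e <= M * e).
      { unfold M. assert ((G + c) ^ 2 * e / (2 * G) = (G + c) ^ 2 / (2 * G) * e) by (field; lra). nra. }
      lra.
Qed.

Definition LocMax (c G s p : R) : Prop := forall y, c < y < G -> area c G s y <= area c G s p.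

Lemma sqrt_facts c G : 0 < c -> c < G ->
  sqrt (c * G) * sqrt (c * G) = c * G /\ c < sqrt (c * G) /\ sqrt (c * G) < G.
Proof.
  intros. assert (E : sqrt (c * G) * sqrt (c * G) = c * G) by (apply sqrt_sqrt; nra).
  pose proof (sqrt_pos (c * G)). split; auto. split; nra.
Qed.

Lemma ln_neg x : 0 < x < 1 -> ln x < 0.
Proof. intros. rewrite <- ln_1. apply ln_increasing; lra. Qed.

Lemma V_foc c G s p : 0 < c -> c < G -> 0 < s < 1 -> c < p < G ->
  c * G < p ^ 2 -> p < lin c G s -> LocMax c G s p -> Dv c G s p = 0.
Proof.
  intros Hc HcG Hs Hp Hsq Hl HM.
  destruct (sqrt_facts c G Hc HcG) as (Er & Hcr & HrG). set (r := sqrt (c * G)) in *.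
  assert (Hrp : r < p) by nra.
  set (h := Rmin (p - r) (Rmin (lin c G s - p) (G - p))).
  assert (Hh : 0 < h) by (unfold h; repeat apply Rmin_pos; lra).
  assert (h1 : h <= p - r) by (unfold h; apply Rmin_l).
  assert (h2 : h <= lin c G s - p) by (unfold h; eapply Rle_trans; [apply Rmin_r|apply Rmin_l]).
  assert (h3 : h <= G - p) by (unfold h; eapply Rle_trans; [apply Rmin_r|apply Rmin_r]).
  destruct (V_order c G s p Hc HcG Hs ltac:(lra) ltac:(lra) Hsq ltac:(lra)) as (O1 & O2 & O3 & O4 & O5).
  apply (deriv_zero_max (Gv c G s) p (Dv c G s p) h).
  - apply deriv_Gv; try lra. apply Dq_pos_big; lra.
  - auto.
  - intros y Hy. rewrite <- area_V by (try lra; nra). rewrite <- area_V by (try lra).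
    apply HM. lra.
Qed.

Lemma ws_eq_W1_lin c G s p : 0 < c -> c < G -> 0 < s < 1 -> c < p < G ->
  c * G < p ^ 2 -> p = lin c G s -> wsf c s p = W1f c G s p.
Proof.
  intros Hc HcG Hs Hp Hsq Hl.
  assert (HG : 0 < G) by lra.
  destruct (V_order c G s p Hc HcG Hs ltac:(lra) ltac:(lra) Hsq ltac:(lra)) as (O1 & O2 & O3 & O4 & O5).
  pose proof (ws_ge_cG c G s p Hc HG Hs ltac:(lra) ltac:(lra)).
  pose proof (ws_le_cG c G s p Hc HG Hs ltac:(lra) ltac:(lra)).
  assert (Ew : wsf c s p = c / G) by lra.
  assert (P0 : phi c G s p (wsf c s p) = 0).
  { rewrite phi_ws by lra. rewrite Ks_ws by lra. rewrite Ew. field. split; lra. }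
  pose proof (Dq_pos_big c G s p Hc HG Hs Hsq).
  rewrite phi_fact in P0 by lra.
  assert (A : 0 < c * G * s ^ 2) by pos.
  assert (E2 : (wsf c s p - W1f c G s p) * (wsf c s p - W2f c G s p) = 0).
  { apply Rmult_eq_reg_l with (c * G * s ^ 2). rewrite Rmult_0_r. rewrite <- P0. ring. lra. }
  apply Rmult_integral in E2. destruct E2; lra.
Qed.

Lemma V_boundary_contra c G s p : 0 < c -> c < G -> 0 < s < 1 -> c < p < G ->
  c * G < p ^ 2 -> p = lin c G s -> LocMax c G s p -> False.
Proof.
  intros Hc HcG Hs Hp Hsq Hl HM.
  assert (HG : 0 < G) by lra.
  destruct (sqrt_facts c G Hc HcG) as (Er & Hcr & HrG). set (r := sqrt (c * G)) in *.
  assert (Hrp : r < p) by nra.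
  destruct (V_order c G s p Hc HcG Hs ltac:(lra) ltac:(lra) Hsq ltac:(lra)) as (O1 & O2 & O3 & O4 & O5).
  pose proof (ws_eq_W1_lin c G s p Hc HcG Hs Hp Hsq Hl) as EW.
  assert (HD : Dv c G s p < 0).
  { unfold Dv. rewrite EW. replace (Ls s (W1f c G s p) - Ls s (W1f c G s p)) with 0 by ring.
    assert (0 < Ks s (W1f c G s p) < 1) by (unfold Ks; split; nra).
    pose proof (ln_neg _ H).
    assert (ln (Ks s (W1f c G s p)) / (G * s) < 0).
    { unfold Rdiv. apply Rmult_neg_pos. auto. apply Rinv_0_lt_compat. pos. }
    lra. }
  assert (Hder : is_derive (Gv c G s) p (Dv c G s p)).
  { apply deriv_Gv; try lra. apply Dq_pos_big; lra. }
  destruct (deriv_neg_left (Gv c G s) p (Dv c G s p) Hder HD (Rmin (p - r) (p - c))) as [y [Hy Hgt]].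
  { apply Rmin_pos; lra. }
  assert (y1 : Rmin (p - r) (p - c) <= p - r) by apply Rmin_l.
  assert (y2 : Rmin (p - r) (p - c) <= p - c) by apply Rmin_r.
  assert (area c G s y <= area c G s p) by (apply HM; lra).
  rewrite (area_V c G s y) in H by (try lra; nra).
  rewrite (area_V c G s p) in H by lra. lra.
Qed.

Lemma W1_lt_wc c G s p : 0 < c -> c < G -> 0 < s < 1 -> c < p ->
  lin c G s < p -> W1f c G s p < wcf G s p /\ wcf G s p < W2f c G s p.
Proof.
  intros Hc HcG Hs Hp Hl. assert (HG : 0 < G) by lra.
  assert (HD := Dq_nonneg_lin c G s p Hc HG Hs ltac:(lra)).
  pose proof (wc_gt_cG c G s p Hc HG Hs Hl).
  assert (P : phi c G s p (wcf G s p) < 0).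
  { rewrite phi_wc by lra. assert (0 < p ^ 2) by (apply pow_lt; lra).
    rewrite Rmult_comm. apply Rmult_neg_pos; lra. }
  rewrite phi_fact in P by lra.
  assert (A : 0 < c * G * s ^ 2) by pos.
  apply prod_neg in P; auto.
  pose proof (W1_le_W2 c G s p Hc HG (proj1 Hs) ltac:(lra)).
  destruct (Rlt_le_dec (W1f c G s p) (wcf G s p)); destruct (Rlt_le_dec (wcf G s p) (W2f c G s p)); try (split; auto; fail).
  - assert (0 <= (wcf G s p - W1f c G s p) * (wcf G s p - W2f c G s p)) by (apply Rmult_le_pos; lra). lra.
  - assert (0 <= (wcf G s p - W1f c G s p) * (wcf G s p - W2f c G s p)) by (replace ((wcf G s p - W1f c G s p) * (wcf G s p - W2f c G s p)) with ((W1f c G s p - wcf G s p) * (W2f c G s p - wcf G s p)) by ring; apply Rmult_le_pos; lra). lra.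
  - replace (wcf G s p - W1f c G s p) with 0 in P by lra. lra.
Qed.

Lemma VI_foc c G s p : 0 < c -> c < G -> 0 < s < 1 -> c < p < G ->
  p ^ 2 < c * G -> lin c G s < p -> LocMax c G s p -> Dvi c G s p = 0.
Proof.
  intros Hc HcG Hs Hp Hsq Hl HM. assert (HG : 0 < G) by lra.
  destruct (sqrt_facts c G Hc HcG) as (Er & Hcr & HrG). set (r := sqrt (c * G)) in *.
  assert (Hrp : p < r) by nra.
  set (h := Rmin (r - p) (Rmin (p - lin c G s) (p - c))).
  assert (Hh : 0 < h) by (unfold h; repeat apply Rmin_pos; lra).
  assert (h1 : h <= r - p) by (unfold h; apply Rmin_l).
  assert (h2 : h <= p - lin c G s) by (unfold h; eapply Rle_trans; [apply Rmin_r|apply Rmin_l]).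
  assert (h3 : h <= p - c) by (unfold h; eapply Rle_trans; [apply Rmin_r|apply Rmin_r]).
  destruct (W1_lt_wc c G s p Hc HcG Hs ltac:(lra) Hl) as [Q1 Q2].
  destruct (VI_order c G s p Hc HcG Hs ltac:(lra) ltac:(lra) Hsq ltac:(lra) Q1) as (O1 & O2 & O3 & O4).
  assert (HD : 0 < Dq c G s p).
  { pose proof (W1_lt_W2 c G s p). unfold W1f, W2f in Q1, Q2.
    destruct (Rlt_le_dec 0 (Dq c G s p)); auto.
    assert (Dq c G s p = 0) by (pose proof (Dq_nonneg_lin c G s p Hc HG Hs ltac:(lra)); lra).
    unfold W1f, W2f in *. rewrite H0, sqrt_0 in Q1, Q2. lra. }
  apply (deriv_zero_max (Gvi c G s) p (Dvi c G s p) h).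
  - apply deriv_Gvi; lra.
  - auto.
  - intros y Hy.
    destruct (W1_lt_wc c G s y Hc HcG Hs ltac:(lra) ltac:(lra)) as [Q1' Q2'].
    rewrite <- area_VI by (try lra; nra). rewrite <- area_VI by (try lra).
    apply HM. lra.
Qed.

Lemma W_sum c G s p : 0 < c -> 0 < G -> 0 < s ->
  W1f c G s p + W2f c G s p = (p ^ 2 - 2 * c * G * s * (1 - s)) / (c * G * s ^ 2).
Proof. intros. unfold W1f, W2f. field. repeat split; lra. Qed.

Lemma wc_eq_W2_lin c G s p : 0 < c -> c < G -> 0 < s < 1 ->
  p = lin c G s -> G * (1 - s) < c * s ->
  0 < Dq c G s p /\ W1f c G s p < wcf G s p /\ wcf G s p = W2f c G s p.
Proof.
  intros Hc HcG Hs Hl Hgs. assert (HG : 0 < G) by lra.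
  assert (Hp : c < p) by (rewrite Hl; unfold lin; nra).
  assert (HD : 0 < Dq c G s p).
  { unfold Dq. rewrite Hl. unfold lin.
    replace ((G * (1 - s) + c * s) ^ 2 - 4 * c * G * s * (1 - s)) with ((c * s - G * (1 - s)) ^ 2) by ring.
    apply pow_lt. lra. }
  split; auto.
  pose proof (wc_ge_cG c G s p Hc HG Hs ltac:(lra)).
  pose proof (wc_le_cG c G s p Hc HG Hs ltac:(lra)).
  assert (Ew : wcf G s p = c / G) by lra.
  assert (P0 : phi c G s p (wcf G s p) = 0) by (rewrite phi_wc by lra; rewrite Ew; ring).
  rewrite phi_fact in P0 by lra.
  assert (A : 0 < c * G * s ^ 2) by pos.
  assert (E2 : (wcf G s p - W1f c G s p) * (wcf G s p - W2f c G s p) = 0).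
  { apply Rmult_eq_reg_l with (c * G * s ^ 2). rewrite Rmult_0_r. rewrite <- P0. ring. lra. }
  pose proof (W1_lt_W2 c G s p Hc HG (proj1 Hs) ltac:(lra) HD).
  assert (Hsum : 0 < 2 * wcf G s p - (W1f c G s p + W2f c G s p)).
  { rewrite W_sum by lra. rewrite Ew.
    assert (E : (2 * (c / G) - (p ^ 2 - 2 * c * G * s * (1 - s)) / (c * G * s ^ 2)) * (c * G * s ^ 2)
               = (c * s) ^ 2 - (G * (1 - s)) ^ 2).
    { rewrite Hl. unfold lin. field. split; lra. }
    assert (0 < (c * s) ^ 2 - (G * (1 - s)) ^ 2).
    { assert (0 <= G * (1 - s)) by nra. nra. }
    destruct (Rlt_le_dec 0 (2 * (c / G) - (p ^ 2 - 2 * c * G * s * (1 - s)) / (c * G * s ^ 2))); auto.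
    assert ((2 * (c / G) - (p ^ 2 - 2 * c * G * s * (1 - s)) / (c * G * s ^ 2)) * (c * G * s ^ 2) <= 0)
      by (apply Rmult_le_0_r; lra). lra. }
  apply Rmult_integral in E2. destruct E2 as [E2|E2]; lra.
Qed.

Lemma VI_boundary_contra c G s p : 0 < c -> c < G -> 0 < s < 1 -> c < p < G ->
  p ^ 2 < c * G -> p = lin c G s -> G * (1 - s) < c * s -> LocMax c G s p -> False.
Proof.
  intros Hc HcG Hs Hp Hsq Hl Hgs HM. assert (HG : 0 < G) by lra.
  destruct (sqrt_facts c G Hc HcG) as (Er & Hcr & HrG). set (r := sqrt (c * G)) in *.
  assert (Hrp : p < r) by nra.
  destruct (wc_eq_W2_lin c G s p Hc HcG Hs Hl Hgs) as (HD & Q1 & Q2).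
  destruct (VI_order c G s p Hc HcG Hs ltac:(lra) ltac:(lra) Hsq ltac:(lra) Q1) as (O1 & O2 & O3 & O4).
  assert (HDv : 0 < Dvi c G s p).
  { unfold Dvi. rewrite <- Q2. replace (ln (Ks s (wcf G s p)) - ln (Ks s (wcf G s p))) with 0 by ring.
    assert (ln (wcf G s p) < 0) by (apply ln_neg; lra).
    assert (Ls s (wcf G s p) < s).
    { unfold Ls. assert ((1 - s) * ln (wcf G s p) < 0) by (apply Rmult_pos_neg; lra). nra. }
    assert (0 < c / p ^ 2) by (apply Rdiv_lt_0_compat; [lra | apply pow_lt; lra]).
    assert (0 < c / p ^ 2 * (s - Ls s (wcf G s p))) by (apply Rmult_lt_0_compat; lra).
    replace (- 0 / (G * s)) with 0 by (field; lra). lra. }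
  assert (Hder : is_derive (Gvi c G s) p (Dvi c G s p)) by (apply deriv_Gvi; lra).
  destruct (deriv_pos_right (Gvi c G s) p (Dvi c G s p) Hder HDv (Rmin (r - p) (G - p))) as [y [Hy Hgt]].
  { apply Rmin_pos; lra. }
  assert (y1 : Rmin (r - p) (G - p) <= r - p) by apply Rmin_l.
  assert (y2 : Rmin (r - p) (G - p) <= G - p) by apply Rmin_r.
  assert (area c G s y <= area c G s p) by (apply HM; lra).
  destruct (W1_lt_wc c G s y Hc HcG Hs ltac:(lra) ltac:(lra)) as [Q1' Q2'].
  rewrite (area_VI c G s y) in H by (try lra; nra).
  rewrite (area_VI c G s p) in H by lra. lra.
Qed.

Lemma V_equation c G s p : 0 < c -> c < G -> 0 < s < 1 -> c < p < G ->
  c * G < p ^ 2 -> p < lin c G s -> Dv c G s p = 0 ->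
  RInt (dC G s p) (W1f c G s p) 1 - RInt (dS c s p) (wsf c s p) (W1f c G s p)
  = 1 - 2 * W1f c G s p + wsf c s p.
Proof.
  intros Hc0 HcG Hs0 Hp Hsq Hl HD0.
  destruct (V_order c G s p Hc0 HcG Hs0 ltac:(lra) ltac:(lra) Hsq ltac:(lra)) as (O1 & O2 & O3 & O4 & O5).
  rewrite RInt_dC by lra. rewrite RInt_dS by lra. rewrite Hc_1.
  assert (E : 1 - Hc G s p (W1f c G s p) - (Hs c s p (W1f c G s p) - Hs c s p (wsf c s p))
              = 1 - 2 * W1f c G s p + wsf c s p + p * Dv c G s p).
  { unfold Hc, Hs, Dv, Ls. field. split; lra. }
  rewrite E, HD0. ring.
Qed.

Lemma VI_equation c G s p : 0 < c -> c < G -> 0 < s < 1 -> c < p < G ->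
  p ^ 2 < c * G -> lin c G s < p -> Dvi c G s p = 0 ->
  RInt (dS c s p) (W2f c G s p) 1 - RInt (dC G s p) (wcf G s p) (W2f c G s p)
  = 1 - 2 * W2f c G s p + wcf G s p.
Proof.
  intros Hc0 HcG Hs0 Hp Hsq Hl HD0.
  destruct (W1_lt_wc c G s p Hc0 HcG Hs0 ltac:(lra) Hl) as [Q1 Q2].
  destruct (VI_order c G s p Hc0 HcG Hs0 ltac:(lra) ltac:(lra) Hsq ltac:(lra) Q1) as (O1 & O2 & O3 & O4).
  rewrite RInt_dC by lra. rewrite RInt_dS by lra. rewrite Hs_1 by lra.
  assert (E : 1 - c * s / p - Hs c s p (W2f c G s p) - (Hc G s p (W2f c G s p) - Hc G s p (wcf G s p))
              = 1 - 2 * W2f c G s p + wcf G s p - p * Dvi c G s p).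
  { unfold Hc, Hs, Dvi, Ls. field. split; lra. }
  rewrite E, HD0. ring.
Qed.

Lemma w0_eq c G t tau p : 0 < c -> 0 < G -> 0 < t -> 0 < tau < t -> c < p ->
  w0 c G t tau p = Rmax (wsf c (tau / t) p) (wcf G (tau / t) p).
Proof.
  intros. unfold w0, wsf, wcf.
  assert (0 < tau / t < 1) by (split; [apply Rdiv_lt_0_compat | apply Rlt_div_l]; lra).
  f_equal.
  - assert (p * t - c * tau > 0) by nra.
    assert (p - c * (tau / t) > 0).
    { replace (p - c * (tau / t)) with ((p * t - c * tau) / t) by (field; lra). apply Rdiv_lt_0_compat; lra. }
    field. split; apply Rgt_not_eq; lra.
  - field. lra.
Qed.

Lemma lin_lt_p_big_s c G s p : 0 < c -> c < G -> 0 < s < 1 -> G * (1 - s) <= c * s -> 0 < p ->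
  c * G <= p ^ 2 -> lin c G s < p.
Proof.
  intros Hc HcG Hs Hgs Hp Hsq. unfold lin.
  assert (L : (G * (1 - s) + c * s) * (G + c) <= 2 * G * c) by nra.
  destruct (Rlt_le_dec (G * (1 - s) + c * s) p); auto.
  assert (p * (G + c) <= 2 * G * c) by nra.
  assert ((p * (G + c)) ^ 2 <= (2 * G * c) ^ 2) by (apply pow_incr; split; nra).
  assert (c * G * (G + c) ^ 2 <= (2 * G * c) ^ 2).
  { replace ((p * (G + c)) ^ 2) with (p ^ 2 * (G + c) ^ 2) in H0 by ring.
    assert (c * G * (G + c) ^ 2 <= p ^ 2 * (G + c) ^ 2) by (apply Rmult_le_compat_r; [apply pow2_ge_0|lra]). lra. }
  assert ((G + c) ^ 2 <= 4 * G * c).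
  { apply Rmult_le_reg_l with (c * G). nra. nra. }
  nra.
Qed.

Lemma p_lt_lin_small_s c G s p : 0 < c -> c < G -> 0 < s <= 1/2 -> 0 < p -> p ^ 2 <= c * G -> p < lin c G s.
Proof.
  intros Hc HcG Hs Hp Hsq. unfold lin.
  assert (L : (G + c) / 2 <= G * (1 - s) + c * s) by nra.
  assert (((G + c) / 2) ^ 2 > c * G) by (assert (0 < (G - c) ^ 2) by (apply pow_lt; lra); nra).
  destruct (Rlt_le_dec p ((G + c) / 2)). lra.
  assert (((G + c) / 2) ^ 2 <= p ^ 2) by (apply pow_incr; split; lra). lra.
Qed.

Theorem theorem3 (c G0 t taus ps : R) :
  0 < c -> c < G0 -> 0 < t ->
  inD c G0 t taus ps ->
  (forall tau p, inD c G0 t tau p -> coop_area c G0 t tau p <= coop_area c G0 t taus ps) ->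
  in_closure (region_IV c G0 t) taus ps
  \/ (region_V c G0 t taus ps /\
      A_c G0 t taus ps (w1 c G0 t taus ps) 1 - A_s c t taus ps (w0 c G0 t taus ps) (w1 c G0 t taus ps)
        = 1 - 2 * w1 c G0 t taus ps + w0 c G0 t taus ps)
  \/ (region_VI c G0 t taus ps /\
      A_s c t taus ps (w2 c G0 t taus ps) 1 - A_c G0 t taus ps (w0 c G0 t taus ps) (w2 c G0 t taus ps)
        = 1 - 2 * w2 c G0 t taus ps + w0 c G0 t taus ps).
Proof.
  intros Hc HcG Ht HD HMax.
  set (G := G0) in *. set (p := ps) in *.
  destruct HD as [[Ht1 Ht2] [Hp1 Hp2]].
  set (s := taus / t).
  assert (Hs : 0 < s < 1) by (unfold s; split; [apply Rdiv_lt_0_compat | apply Rlt_div_l]; lra).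
  assert (Etau : taus = s * t) by (unfold s; field; lra).
  assert (HG : 0 < G) by lra.
  assert (MAX : forall s' p', 0 < s' < 1 -> c < p' < G -> area c G s' p' <= area c G s p).
  { intros s' p' Hs' Hp'.
    assert (H := HMax (s' * t) p' ltac:(unfold inD; repeat split; nra)).
    rewrite !coop_area_eq in H. replace (s' * t / t) with s' in H by (field; lra). exact H. }
  assert (LM : LocMax c G s p) by (intros y Hy; apply MAX; auto).
  destruct (sqrt_facts c G Hc HcG) as (Er & Hcr & HrG). set (r := sqrt (c * G)) in *.
  destruct (Rtotal_order (p ^ 2) (c * G)) as [Hsq | [Hsq | Hsq]];
  destruct (Rtotal_order p (lin c G s)) as [Hl | [Hl | Hl]].
  - (* p^2 < cG, p < lin *)
    destruct (Rlt_le_dec (Dq c G s p) 0) as [HDq | HDq].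
    + set (q := sqrt (4 * c * G * s * (1 - s))).
      assert (Hcg : 0 < c * G) by nra. assert (Hss : 0 < s * (1 - s)) by nra.
      assert (Hq2 : q * q = 4 * c * G * s * (1 - s)) by (apply sqrt_sqrt; nra).
      assert (Hq0 : 0 <= q) by apply sqrt_pos.
      assert (Hpq : p < q) by (unfold Dq in HDq; nra).
      assert (HqG : q < G) by (assert (0 <= c * G * (2 * s - 1) ^ 2) by (apply Rmult_le_pos; [nra|apply pow2_ge_0]); nra).
      exfalso. apply (Rlt_not_le _ _ (PD_witness c G s p s ((p + q) / 2) Hc HcG ltac:(lra) ltac:(lra) ltac:(lra) ltac:(lra) ltac:(lra)
        (fun w Hw _ => pure_alpha c G s ((p + q) / 2) w Hc HG ltac:(lra) ltac:(unfold Dq; nra)))).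
      apply MAX; lra.
    + destruct (Rle_lt_dec s (1/2)) as [Hs2 | Hs2].
      * exfalso. apply (Rlt_not_le _ _ (PD_witness c G s p s r Hc HcG ltac:(lra) ltac:(lra) ltac:(nra) ltac:(lra) ltac:(right; nra)
          (fun w Hw _ => pure_beta c G s r w Hc HG ltac:(lra) ltac:(lra) ltac:(nra) ltac:(lra)))).
        apply MAX; lra.
      * destruct (Rle_lt_dec (G * (1 - s)) (c * s)) as [Hgs | Hgs].
        -- assert (HlG : lin c G s < G) by (unfold lin; nra).
           exfalso. apply (Rlt_not_le _ _ (PD_witness c G s p s (lin c G s) Hc HcG ltac:(lra) ltac:(lra) ltac:(lra) ltac:(lra) ltac:(lra)
             (fun w Hw Hpos => pure_gamma c G s (lin c G s) w Hc HG Hs ltac:(lra) Hgs ltac:(lra)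
                 (Rlt_le _ _ (dS_pos_inv c s (lin c G s) w Hc Hs ltac:(lra) ltac:(lra) Hpos))))).
           apply MAX; lra.
        -- left. rewrite Etau. intros eps Heps. exists (s * t), p. split.
           ++ apply region_IV_s; try lra. unfold Dq in HDq; lra. split; [lra|]. apply lt_GGc; lra.
           ++ replace (s * t - s * t) with 0 by ring. replace (p - p) with 0 by ring. rewrite Rabs_R0. lra.
  - (* p^2 < cG, p = lin *)
    destruct (Rlt_le_dec (G * (1 - s)) (c * s)) as [Hgs | Hgs].
    + exfalso. apply (VI_boundary_contra c G s p); auto.
    + left. rewrite Etau. apply closure_ii; try lra.
      destruct (Rle_lt_dec s (1/2)); auto.
      pose proof (p_lt_lin_small_s c G s p Hc HcG ltac:(lra) ltac:(lra) ltac:(lra)). lra.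
  - (* p^2 < cG, p > lin : VI *)
    right; right.
    assert (HDq : 0 <= Dq c G s p) by (apply Dq_nonneg_lin; lra).
    split.
    + unfold region_VI. cbv zeta. change (sr t taus) with s. unfold inD.
      repeat split; try lra.
      * unfold Dq in HDq. lra.
      * unfold lin in Hl. lra.
      * apply sqrt_lt_iff; nra.
    + rewrite (w2_eq c G t taus p) by (try lra; exact HDq). rewrite (w0_eq c G t taus p) by lra.
      change (taus / t) with s.
      rewrite Rmax_right.
      2: { pose proof (ws_le_cG c G s p Hc HG Hs ltac:(lra) ltac:(lra)). pose proof (wc_ge_cG c G s p Hc HG Hs ltac:(lra)). lra. }
      unfold A_s, A_c. change (fun w => d_s c t taus p w) with (dS c s p).
      change (fun w => d_c G t taus p w) with (dC G s p).
      apply VI_equation; try lra. apply VI_foc; auto; lra.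
  - (* p^2 = cG, p < lin *)
    destruct (Rlt_le_dec s (1/2)) as [Hs2 | Hs2].
    + exfalso. apply (Rlt_not_le _ _ (PD_witness c G s p (1/2) p Hc HcG ltac:(lra) ltac:(lra) ltac:(lra) ltac:(lra) ltac:(lra)
        (fun w Hw _ => pure_beta c G (1/2) p w Hc HG ltac:(lra) ltac:(lra) ltac:(lra) ltac:(lra)))).
      apply MAX; lra.
    + left. rewrite Etau. destruct (Req_dec s (1/2)) as [Eh | Eh].
      * rewrite Eh. apply closure_i_half; auto.
      * apply closure_i_gt; try lra.
        destruct (Rlt_le_dec (c * s) (G * (1 - s))) as [h|h]; auto.
        pose proof (lin_lt_p_big_s c G s p Hc HcG Hs h ltac:(lra) ltac:(lra)). lra.
  - (* p^2 = cG, p = lin *)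
    left. rewrite Etau. apply closure_i_gt; try lra.
    + destruct (Rle_lt_dec s (1/2)); auto.
      pose proof (p_lt_lin_small_s c G s p Hc HcG ltac:(lra) ltac:(lra) ltac:(lra)). lra.
    + destruct (Rlt_le_dec (c * s) (G * (1 - s))) as [h|h]; auto.
      pose proof (lin_lt_p_big_s c G s p Hc HcG Hs h ltac:(lra) ltac:(lra)). lra.
  - (* p^2 = cG, p > lin *)
    set (s' := (G - p) / (G - c)).
    assert (Hs' : 0 < s' < s).
    { unfold s'. split. apply Rdiv_lt_0_compat; lra. apply Rlt_div_l. lra. unfold lin in Hl. lra. }
    assert (Hls : lin c G s' = p) by (unfold lin, s'; field; lra).
    exfalso. apply (Rlt_not_le _ _ (PC_witness c G s p s' p Hc HcG ltac:(lra) ltac:(lra) ltac:(lra) ltac:(lra) ltac:(lra)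
      (fun w Hw Hpos => pure_dc c G s' p w Hc HG ltac:(lra) ltac:(lra) ltac:(lra) ltac:(lra)
          (dC_pos_inv G s' p w HG ltac:(lra) ltac:(lra) ltac:(lra) Hpos) ltac:(lra)))).
    apply MAX; lra.
  - (* p^2 > cG, p < lin : V *)
    right; left.
    assert (HDq : 0 < Dq c G s p) by (apply Dq_pos_big; lra).
    split.
    + unfold region_V. cbv zeta. change (sr t taus) with s. unfold inD.
      repeat split; try lra. unfold Dq in HDq; lra. unfold lin in Hl; lra.
      apply sqrt_gt_iff; nra.
    + rewrite (w1_eq c G t taus p) by (try lra; exact (Rlt_le _ _ HDq)). rewrite (w0_eq c G t taus p) by lra.
      change (taus / t) with s.
      rewrite Rmax_left.
      2: { pose proof (ws_ge_cG c G s p Hc HG Hs ltac:(lra) ltac:(lra)). pose proof (wc_le_cG c G s p Hc HG Hs ltac:(lra)). lra. }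
      unfold A_s, A_c. change (fun w => d_s c t taus p w) with (dS c s p).
      change (fun w => d_c G t taus p w) with (dC G s p).
      apply V_equation; try lra. apply V_foc; auto; lra.
  - (* p^2 > cG, p = lin *)
    exfalso. apply (V_boundary_contra c G s p); auto.
  - (* p^2 > cG, p > lin *)
    set (p' := Rmax r (lin c G s)).
    assert (Hp'1 : r <= p') by apply Rmax_l.
    assert (Hp'2 : lin c G s <= p') by apply Rmax_r.
    assert (Hp'3 : p' < p) by (apply Rmax_lub_lt; nra).
    exfalso. apply (Rlt_not_le _ _ (PC_witness c G s p s p' Hc HcG ltac:(lra) ltac:(lra) ltac:(lra) ltac:(lra) ltac:(lra)
      (fun w Hw Hpos => pure_dc c G s p' w Hc HG Hs ltac:(lra) ltac:(nra) Hp'2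
          (dC_pos_inv G s p' w HG Hs ltac:(lra) ltac:(lra) Hpos) ltac:(lra)))).
    apply MAX; lra.
Qed.
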